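(* Consider the system \[ \begin{aligned} \dot T(t)&= s-dT(t)+aT(t)\Big(1-\frac{T(t)+I(t)}{T_{\max}}\Big)-\frac{bT(t)V(t)}{1+\alpha V(t)},\\ \dot I(t)&= \frac{bT(t-\tau)V(t-\tau)}{1+\alpha V(t-\tau)}+aI(t)\Big(1-\frac{T(t)+I(t)}{T_{\max}}\Big)-\mu I(t),\\ \dot V(t)&= pI(t)-cV(t), \end{aligned} \] with positive constants $s,d,a,T_{\max},b,\alpha,\mu,p,c$ and $\tau\ge0$, and let $E_2=(T_2,I_2,V_2)$ be an infected equilibrium ($T_2,I_2,V_2>0$). Let $a_2,a_1,a_0,b_1,b_0,A,B,C,\Delta,z_1,\tau_0$ be as defined below, and suppose $a_0+b_0>0$ and $a_2(a_1+b_1)-(a_0+b_0)>0$. (a) If $C\ge0$ and $\Delta=A^2-3B<0$, then all roots of $\lambda^3+a_2\lambda^2+a_1\lambda+a_0+(b_1\lambda+b_0)e^{-\lambda\tau}=0$ have negative real parts for all $\tau\ge0$, so $E_2$ is locally asymptotically stable for all $\tau\ge0$. (b) If $C<0$, or if $C\ge0$, $z_1>0$ and $z_1^3+Az_1^2+Bz_1+C\le0$, then all roots of that equation have negative real parts when $\tau\in[0,\tau_0)$, so $E_2$ is locally asymptotically stable for $\tau\in[0,\tau_0)$.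
   Context: Set $\beta=\frac{bV_2}{1+\alpha V_2}$, $k=\frac{aT_2}{T_{\max}}$, $q=\frac{aI_2}{T_{\max}}$, $m=\frac{bT_2}{(1+\alpha V_2)^2}$, $\kappa=\frac{pI_2}{V_2}$, $\rho=d-a+\frac{a(T_2+I_2)}{T_{\max}}$, $A_{11}=\rho+k+\beta$, $A_{22}=\frac{bT_2V_2}{(1+\alpha V_2)I_2}+q$, $a_2=A_{11}+A_{22}+\kappa$, $a_1=A_{11}A_{22}+\kappa A_{11}+\kappa A_{22}-kq$, $a_0=\kappa A_{11}A_{22}-\kappa kq-pqm$, $b_1=\beta k-pm$, $b_0=\beta k\kappa+\beta pm-pmA_{11}$; with these, the characteristic equation of the linearization at $E_2$ is $\lambda^3+a_2\lambda^2+a_1\lambda+a_0+(b_1\lambda+b_0)e^{-\lambda\tau}=0$. Let $A=a_2^2-2a_1$, $B=a_1^2-2a_2a_0-b_1^2$, $C=a_0^2-b_0^2$, $\Delta=A^2-3B$, and, when $\Delta\ge0$, $z_1=\frac{-A+\sqrt{\Delta}}{3}$ (the condition $z_1>0$ includes that $\Delta\ge0$). When $z^3+Az^2+Bz+C=0$ has a positive root, let $z_0$ be its smallest positive root, $\omega_0=\sqrt{z_0}$, and \[ \tau_0=\frac{1}{\omega_0}\arccos\Big[\frac{b_0(a_2\omega_0^2-a_0)+b_1\omega_0(\omega_0^3-a_1\omega_0)}{b_0^2+b_1^2\omega_0^2}\Big]. \] *)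

(* Defs.v *)
From Stdlib Require Import Reals.
From Coquelicot Require Import Coquelicot.
Open Scope R_scope.

Definition Cexp (z : C) : C :=
  (exp (Re z) * cos (Im z), exp (Re z) * sin (Im z)).

Definition cbeta (d a Tmax b alpha p T2 I2 V2 : R) := b * V2 / (1 + alpha * V2).
Definition ck (d a Tmax b alpha p T2 I2 V2 : R) := a * T2 / Tmax.
Definition cq (d a Tmax b alpha p T2 I2 V2 : R) := a * I2 / Tmax.
Definition cm (d a Tmax b alpha p T2 I2 V2 : R) := b * T2 / (1 + alpha * V2) ^ 2.
Definition ckappa (d a Tmax b alpha p T2 I2 V2 : R) := p * I2 / V2.
Definition crho (d a Tmax b alpha p T2 I2 V2 : R) := d - a + a * (T2 + I2) / Tmax.
Definition A11 (d a Tmax b alpha p T2 I2 V2 : R) := (crho d a Tmax b alpha p T2 I2 V2) + (ck d a Tmax b alpha p T2 I2 V2) + (cbeta d a Tmax b alpha p T2 I2 V2).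
Definition A22 (d a Tmax b alpha p T2 I2 V2 : R) := b * T2 * V2 / ((1 + alpha * V2) * I2) + (cq d a Tmax b alpha p T2 I2 V2).
Definition ca2 (d a Tmax b alpha p T2 I2 V2 : R) := (A11 d a Tmax b alpha p T2 I2 V2) + (A22 d a Tmax b alpha p T2 I2 V2) + (ckappa d a Tmax b alpha p T2 I2 V2).
Definition ca1 (d a Tmax b alpha p T2 I2 V2 : R) := (A11 d a Tmax b alpha p T2 I2 V2) * (A22 d a Tmax b alpha p T2 I2 V2) + (ckappa d a Tmax b alpha p T2 I2 V2) * (A11 d a Tmax b alpha p T2 I2 V2) + (ckappa d a Tmax b alpha p T2 I2 V2) * (A22 d a Tmax b alpha p T2 I2 V2) - (ck d a Tmax b alpha p T2 I2 V2) * (cq d a Tmax b alpha p T2 I2 V2).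
Definition ca0 (d a Tmax b alpha p T2 I2 V2 : R) := (ckappa d a Tmax b alpha p T2 I2 V2) * (A11 d a Tmax b alpha p T2 I2 V2) * (A22 d a Tmax b alpha p T2 I2 V2) - (ckappa d a Tmax b alpha p T2 I2 V2) * (ck d a Tmax b alpha p T2 I2 V2) * (cq d a Tmax b alpha p T2 I2 V2) - p * (cq d a Tmax b alpha p T2 I2 V2) * (cm d a Tmax b alpha p T2 I2 V2).
Definition cb1 (d a Tmax b alpha p T2 I2 V2 : R) := (cbeta d a Tmax b alpha p T2 I2 V2) * (ck d a Tmax b alpha p T2 I2 V2) - p * (cm d a Tmax b alpha p T2 I2 V2).
Definition cb0 (d a Tmax b alpha p T2 I2 V2 : R) := (cbeta d a Tmax b alpha p T2 I2 V2) * (ck d a Tmax b alpha p T2 I2 V2) * (ckappa d a Tmax b alpha p T2 I2 V2) + (cbeta d a Tmax b alpha p T2 I2 V2) * p * (cm d a Tmax b alpha p T2 I2 V2) - p * (cm d a Tmax b alpha p T2 I2 V2) * (A11 d a Tmax b alpha p T2 I2 V2).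

Definition cA (a2 a1 : R) := a2 ^ 2 - 2 * a1.
Definition cB (a2 a1 a0 b1 : R) := a1 ^ 2 - 2 * a2 * a0 - b1 ^ 2.
Definition cC (a0 b0 : R) := a0 ^ 2 - b0 ^ 2.
Definition cDelta (A B : R) := A ^ 2 - 3 * B.
Definition cz1 (A Delta : R) := (- A + sqrt Delta) / 3.
Definition hcubic (A B C z : R) := z ^ 3 + A * z ^ 2 + B * z + C.

Definition charf (a2 a1 a0 b1 b0 tau : R) (l : C) : C :=
  (l * l * l + RtoC a2 * (l * l) + RtoC a1 * l + RtoC a0
   + (RtoC b1 * l + RtoC b0) * Cexp (- (l * RtoC tau)))%C.

Definition all_roots_neg (a2 a1 a0 b1 b0 tau : R) : Prop :=
  forall l : C, charf a2 a1 a0 b1 b0 tau l = 0%C -> Re l < 0.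

Definition tau0_of (a2 a1 a0 b1 b0 w0 : R) : R :=
  / w0 * acos ((b0 * (a2 * w0 ^ 2 - a0) + b1 * w0 * (w0 ^ 3 - a1 * w0))
               / (b0 ^ 2 + b1 ^ 2 * w0 ^ 2)).

(* Main.v *)
Require Import Defs.
From Stdlib Require Import Reals Lra Lia Psatz Factorial Classical ClassicalEpsilon.
From Coquelicot Require Import Coquelicot.
Open Scope R_scope.

Lemma Cexp_add (u v : C) : Cexp (u + v)%C = (Cexp u * Cexp v)%C.
Proof.
  destruct u as [a b], v as [c d]; unfold Cexp, Cmult, Cplus; simpl.
  rewrite exp_plus, cos_plus, sin_plus. f_equal; ring.
Qed.

Lemma Cexp_0 : Cexp 0%C = 1%C.
Proof. unfold Cexp, RtoC; simpl. rewrite exp_0, cos_0, sin_0. f_equal; ring. Qed.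

Lemma Cmod_Cexp (u : C) : Cmod (Cexp u) = exp (Re u).
Proof.
  destruct u as [a b]; unfold Cexp, Cmod, Re, Im; cbn [fst snd].
  assert (Hsc : sin b ^ 2 + cos b ^ 2 = 1) by (rewrite <- (sin2_cos2 b); unfold Rsqr; ring).
  replace ((exp a * cos b) ^ 2 + (exp a * sin b) ^ 2) with ((exp a)^2)
    by (transitivity (exp a ^2 * (sin b^2+cos b^2)); [rewrite Hsc; ring| ring]). apply sqrt_pow2. left; apply exp_pos.
Qed.

Definition fc (c u : C) (t : R) : R :=
  exp (t * fst u) * (fst c * cos (t * snd u) - snd c * sin (t * snd u)).

Lemma fc_derive (c u : C) (t : R) : is_derive (fc c u) t (fc (c * u)%C u t).
Proof.
  unfold fc. destruct c as [cr ci], u as [a b]; simpl.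
  auto_derive; [exact I|]. ring.
Qed.

Lemma fc_ext (c d u : C) t : c = d -> fc c u t = fc d u t.
Proof. intros ->; reflexivity. Qed.

Lemma fc_Derive_n (u : C) (n : nat) : forall (c : C) (t : R),
  Derive_n (fc c u) n t = fc (c * u ^ n)%C u t.
Proof.
  induction n; intros c t.
  - simpl. apply fc_ext. ring.
  - simpl. rewrite (Derive_ext _ (fc (c * u ^ n)%C u)) by (intro; apply IHn).
    rewrite (is_derive_unique _ _ _ (fc_derive _ _ _)). apply fc_ext. ring.
Qed.

Lemma fc_ex_derive_n (u c : C) (n : nat) (t : R) : ex_derive_n (fc c u) n t.
Proof.
  destruct n; simpl; [exact I|].
  apply (ex_derive_ext (fc (c * u ^ n)%C u)).
  - intro; symmetry; apply fc_Derive_n.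
  - eexists; apply fc_derive.
Qed.

Fixpoint Tsum (u : C) (n : nat) : C :=
  match n with
  | O => 1%C
  | S m => (Tsum u m + u ^ (S m) / RtoC (INR (fact (S m))))%C
  end.

Lemma Re_mul_Tsum (c u : C) (n : nat) :
  Re (c * Tsum u n)%C = sum_f_R0 (fun m => Re (c * u ^ m)%C / INR (fact m)) n.
Proof.
  induction n.
  - cbn [Tsum sum_f_R0 Cpow fact]. destruct c as [cr ci]. unfold Re, Cmult, RtoC; cbn [fst snd]. simpl. field.
  - replace (sum_f_R0 _ (S n)) with (sum_f_R0 (fun m => Re (c * u ^ m)%C / INR (fact m)) n
       + Re (c * u ^ (S n))%C / INR (fact (S n))) by reflexivity.
    rewrite <- IHn. cbn [Tsum].
    assert (Hf : INR (fact (S n)) <> 0) by (apply not_0_INR; pose proof (lt_O_fact (S n)); lia).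
    set (f := INR (fact (S n))) in *. set (z := (u ^ S n)%C).
    destruct c as [cr ci], z as [zr zi], (Tsum u n) as [tr ti].
    unfold Re, Cmult, Cplus, Cdiv, Cinv, RtoC; cbn [fst snd]. unfold Cmult; cbn [fst snd]. field. exact Hf.
Qed.

Lemma fc_at0 (c u : C) : fc c u 0 = Re (c * 1)%C.
Proof. unfold fc, Re; simpl. rewrite !Rmult_0_l, exp_0, cos_0, sin_0. ring. Qed.

Lemma fc_bound (c u : C) (t : R) : 0 <= t <= 1 -> Rabs (fc c u t) <= Cmod c * exp (Cmod u).
Proof.
  intros [H0 H1]. unfold fc. rewrite Rabs_mult, Rabs_pos_eq by (left; apply exp_pos).
  rewrite Rmult_comm. apply Rmult_le_compat.
  - apply Rabs_pos.
  - left; apply exp_pos.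
  - destruct c as [cr ci]; simpl.
    unfold Cmod; simpl. apply Rsqr_incr_0_var.
    + rewrite Rsqr_sqrt by nra. rewrite <- Rsqr_abs. unfold Rsqr.
      pose proof (sin2_cos2 (t * snd u)). unfold Rsqr in H.
      set (cs := cos (t * snd u)) in *. set (sn := sin (t * snd u)) in *.
      pose proof (pow2_ge_0 (cr*sn+ci*cs)); nra.
    + apply sqrt_pos.
  - destruct u as [a b]; simpl.
    assert (Habs : Rabs a <= Cmod (a, b)) by apply (re_le_Cmod (a,b)).
    destruct (Req_dec (t*a) (Cmod (a,b))) as [E|E]; [rewrite E; right; reflexivity|].
    left; apply exp_increasing.
    assert (t * a <= Rabs a).
    { destruct (Rle_dec 0 a). rewrite Rabs_pos_eq by auto. nra. rewrite Rabs_left by lra. nra. }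
    lra.
Qed.

Lemma fc_1 (c u : C) : fc c u 1 = Re (c * Cexp u)%C.
Proof.
  destruct c as [cr ci], u as [a b]; unfold fc, Cexp, Re, Im, Cmult; cbn [fst snd].
  rewrite !Rmult_1_l. ring.
Qed.

Lemma Re_conj_mul (z : C) : Re (Cconj z * z)%C = Cmod z ^ 2.
Proof.
  rewrite Cmod2_alt. destruct z as [a b]; unfold Cconj, Re, Im, Cmult; cbn [fst snd]. ring.
Qed.

Lemma Cexp_taylor (u : C) (n : nat) :
  Cmod (Cexp u - Tsum u n)%C <= Cmod u ^ (S n) * exp (Cmod u).
Proof.
  set (err := (Cexp u - Tsum u n)%C).
  set (c := Cconj err).
  destruct (Taylor_Lagrange (fc c u) n 0 1 Rlt_0_1) as [z [[Hz0 Hz1] HT]].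
  { intros t _ k _. apply fc_ex_derive_n. }
  rewrite fc_1 in HT.
  assert (Hs : sum_f_R0 (fun m => (1 - 0) ^ m / INR (fact m) * Derive_n (fc c u) m 0) n
              = Re (c * Tsum u n)%C).
  { rewrite Re_mul_Tsum. apply sum_eq. intros i _.
    rewrite fc_Derive_n, fc_at0. rewrite Rminus_0_r, pow1. rewrite Cmult_1_r. field.
    apply not_0_INR. pose proof (lt_O_fact i). lia. }
  rewrite Hs in HT.
  assert (Hre : Re (c * err)%C = Re (c * Cexp u)%C - Re (c * Tsum u n)%C).
  { unfold err. destruct c as [cr ci], (Cexp u) as [p1 p2], (Tsum u n) as [t1 t2].
    unfold Re, Cmult, Cminus, Cplus, Copp; cbn [fst snd]. ring. }
  assert (Hrem : Re (c * err)%C = (1 - 0) ^ S n / INR (fact (S n)) * Derive_n (fc c u) (S n) z) by lra.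
  rewrite fc_Derive_n in Hrem. unfold c in Hrem. rewrite Re_conj_mul in Hrem.
  assert (Hb := fc_bound (Cconj err * u ^ S n)%C u z (conj (Rlt_le _ _ Hz0) (Rlt_le _ _ Hz1))).
  rewrite Cmod_mult, Cmod_conj, Cmod_pow in Hb.
  assert (Hf : 1 <= INR (fact (S n))).
  { replace 1 with (INR 1) by reflexivity. apply le_INR. pose proof (lt_O_fact (S n)). lia. }
  rewrite Rminus_0_r, pow1 in Hrem.
  set (F := INR (fact (S n))) in *.
  set (D := fc (Cconj err * u ^ S n)%C u z) in *.
  set (m := Cmod err) in *. set (B := Cmod u ^ S n * exp (Cmod u)).
  assert (HB0 : 0 <= B) by (unfold B; apply Rmult_le_pos; [apply pow_le, Cmod_ge_0 | left; apply exp_pos]).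
  assert (Hm0 : 0 <= m) by apply Cmod_ge_0.
  assert (HD : Rabs D <= m * B) by (unfold B; rewrite <- Rmult_assoc; exact Hb).
  assert (Hm2 : m ^ 2 <= m * B).
  { rewrite Hrem. apply Rle_trans with (Rabs D); [|exact HD].
    rewrite <- (Rabs_pos_eq (1 / F * D)) by (rewrite <- Hrem; apply pow2_ge_0).
    rewrite Rabs_mult. unfold Rdiv. rewrite Rmult_1_l, Rabs_inv, Rabs_pos_eq by lra.
    apply Rle_trans with (1 * Rabs D); [|lra].
    apply Rmult_le_compat_r; [apply Rabs_pos|].
    rewrite <- Rinv_1. apply Rinv_le_contravar; lra. }
  destruct Hm0 as [Hm0|Hm0]; [|rewrite <- Hm0; exact HB0].
  nra.
Qed.

Lemma pow_le_decr (x : R) (j k : nat) : 0 <= x <= 1 -> (k <= j)%nat -> x ^ j <= x ^ k.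
Proof.
  intros Hx Hkj. replace j with (k + (j - k))%nat by lia. rewrite pow_add.
  rewrite <- (Rmult_1_r (x ^ k)) at 2. apply Rmult_le_compat_l. apply pow_le; lra.
  apply pow_R1_Rle_inv || (apply Rle_trans with (1 ^ (j-k)); [apply pow_incr; lra | rewrite pow1; lra]).
Qed.

Lemma bnd_term (d w : C) (j k : nat) : (k < j)%nat -> Cmod w <= 1 ->
  Cmod (d * w ^ j)%C <= Cmod d * Cmod w ^ (S k).
Proof.
  intros Hkj Hw. rewrite Cmod_mult, Cmod_pow. apply Rmult_le_compat_l; [apply Cmod_ge_0|].
  apply pow_le_decr; [split; [apply Cmod_ge_0|lra]|lia].
Qed.

Definition poly6 (d1 d2 d3 d4 d5 d6 w : C) : C :=
  (d1 * w ^ 1 + d2 * w ^ 2 + d3 * w ^ 3 + d4 * w ^ 4 + d5 * w ^ 5 + d6 * w ^ 6)%C.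

Lemma Cmod_tri3 (a b : C) (x y : R) : Cmod a <= x -> Cmod b <= y -> Cmod (a + b)%C <= x + y.
Proof. intros. eapply Rle_trans; [apply Cmod_triangle|lra]. Qed.

Lemma firstnz (d1 d2 d3 d4 d5 d6 : C) (F : C -> C) (K0 : R) :
  0 <= K0 ->
  (forall w, Cmod w <= 1 -> Cmod (F w - poly6 d1 d2 d3 d4 d5 d6 w)%C <= K0 * Cmod w ^ 6) ->
  (d1 <> 0%C \/ d2 <> 0%C \/ d3 <> 0%C \/ d4 <> 0%C \/ d5 <> 0%C) ->
  exists (k : nat) (c : C) (K : R), (1 <= k <= 5)%nat /\ c <> 0%C /\ 0 <= K /\
    forall w, Cmod w <= 1 -> Cmod (F w - c * w ^ k)%C <= K * Cmod w ^ (S k).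
Proof.
  intros HK0 HF Hnz.
  assert (HR : forall k w, (k <= 5)%nat -> Cmod w <= 1 -> K0 * Cmod w ^ 6 <= K0 * Cmod w ^ (S k)).
  { intros k w Hk Hw. apply Rmult_le_compat_l; auto. apply pow_le_decr; [split; [apply Cmod_ge_0|lra]|lia]. }
  pose proof (Cmod_ge_0 d1). pose proof (Cmod_ge_0 d2). pose proof (Cmod_ge_0 d3).
  pose proof (Cmod_ge_0 d4). pose proof (Cmod_ge_0 d5). pose proof (Cmod_ge_0 d6).
  destruct (Classical_Prop.classic (d1 = 0%C)) as [E1|E1].
  2:{ exists 1%nat, d1, (K0 + Cmod d2 + Cmod d3 + Cmod d4 + Cmod d5 + Cmod d6).
      split; [lia|split; [auto|split; [lra|]]]. intros w Hw.
      replace (F w - d1 * w ^ 1)%C with ((F w - poly6 d1 d2 d3 d4 d5 d6 w) + d2 * w^2 + d3*w^3 + d4*w^4 + d5*w^5 + d6*w^6)%C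
        by (unfold poly6; ring).
      apply Rle_trans with (K0 * Cmod w ^ 2 + Cmod d2 * Cmod w ^ 2 + Cmod d3 * Cmod w ^ 2 + Cmod d4 * Cmod w ^ 2 + Cmod d5 * Cmod w ^ 2 + Cmod d6 * Cmod w ^ 2); [|right; ring].
      repeat apply Cmod_tri3; try (apply bnd_term; [lia|auto]).
      eapply Rle_trans; [apply HF; auto| apply (HR 1%nat); auto]. }
  destruct (Classical_Prop.classic (d2 = 0%C)) as [E2|E2].
  2:{ exists 2%nat, d2, (K0 + Cmod d3 + Cmod d4 + Cmod d5 + Cmod d6).
      split; [lia|split; [auto|split; [lra|]]]. intros w Hw.
      replace (F w - d2 * w ^ 2)%C with ((F w - poly6 d1 d2 d3 d4 d5 d6 w) + d3*w^3 + d4*w^4 + d5*w^5 + d6*w^6)%C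
        by (unfold poly6; rewrite E1; ring).
      apply Rle_trans with (K0 * Cmod w ^ 3 + Cmod d3 * Cmod w ^ 3 + Cmod d4 * Cmod w ^ 3 + Cmod d5 * Cmod w ^ 3 + Cmod d6 * Cmod w ^ 3); [|right; ring].
      repeat apply Cmod_tri3; try (apply bnd_term; [lia|auto]).
      eapply Rle_trans; [apply HF; auto| apply (HR 2%nat); auto]. }
  destruct (Classical_Prop.classic (d3 = 0%C)) as [E3|E3].
  2:{ exists 3%nat, d3, (K0 + Cmod d4 + Cmod d5 + Cmod d6).
      split; [lia|split; [auto|split; [lra|]]]. intros w Hw.
      replace (F w - d3 * w ^ 3)%C with ((F w - poly6 d1 d2 d3 d4 d5 d6 w) + d4*w^4 + d5*w^5 + d6*w^6)%C
        by (unfold poly6; rewrite E1, E2; ring).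
      apply Rle_trans with (K0 * Cmod w ^ 4 + Cmod d4 * Cmod w ^ 4 + Cmod d5 * Cmod w ^ 4 + Cmod d6 * Cmod w ^ 4); [|right; ring].
      repeat apply Cmod_tri3; try (apply bnd_term; [lia|auto]).
      eapply Rle_trans; [apply HF; auto| apply (HR 3%nat); auto]. }
  destruct (Classical_Prop.classic (d4 = 0%C)) as [E4|E4].
  2:{ exists 4%nat, d4, (K0 + Cmod d5 + Cmod d6).
      split; [lia|split; [auto|split; [lra|]]]. intros w Hw.
      replace (F w - d4 * w ^ 4)%C with ((F w - poly6 d1 d2 d3 d4 d5 d6 w) + d5*w^5 + d6*w^6)%C
        by (unfold poly6; rewrite E1, E2, E3; ring).
      apply Rle_trans with (K0 * Cmod w ^ 5 + Cmod d5 * Cmod w ^ 5 + Cmod d6 * Cmod w ^ 5); [|right; ring].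
      repeat apply Cmod_tri3; try (apply bnd_term; [lia|auto]).
      eapply Rle_trans; [apply HF; auto| apply (HR 4%nat); auto]. }
  destruct (Classical_Prop.classic (d5 = 0%C)) as [E5|E5].
  2:{ exists 5%nat, d5, (K0 + Cmod d6).
      split; [lia|split; [auto|split; [lra|]]]. intros w Hw.
      replace (F w - d5 * w ^ 5)%C with ((F w - poly6 d1 d2 d3 d4 d5 d6 w) + d6*w^6)%C
        by (unfold poly6; rewrite E1, E2, E3, E4; ring).
      apply Rle_trans with (K0 * Cmod w ^ 6 + Cmod d6 * Cmod w ^ 6); [|right; ring].
      repeat apply Cmod_tri3; try (apply bnd_term; [lia|auto]).
      eapply Rle_trans; [apply HF; auto| apply (HR 5%nat); auto]. }
  exfalso; tauto.
Qed.

Lemma RtoC_neq0 (r : R) : r <> 0 -> RtoC r <> 0%C.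
Proof. intros H E. apply H. injection E. auto. Qed.

Ltac cnz := repeat split; apply RtoC_neq0; lra.

Lemma INR_fact_vals : INR (fact 1) = 1 /\ INR (fact 2) = 2 /\ INR (fact 3) = 6 /\ INR (fact 4) = 24 /\ INR (fact 5) = 120.
Proof. repeat split; simpl; ring. Qed.

Lemma Tsum5 (u : C) : Tsum u 5 =
  (1 + u + u * u / RtoC 2 + u * u * u / RtoC 6 + u * u * u * u / RtoC 24 + u * u * u * u * u / RtoC 120)%C.
Proof.
  destruct INR_fact_vals as [F1 [F2 [F3 [F4 F5]]]].
  cbn [Tsum]. rewrite F1, F2, F3, F4, F5. simpl Cpow. field; try cnz.
Qed.

Lemma Cexp_neq0 (u : C) : Cexp u <> 0%C.
Proof. intro E. pose proof (Cmod_Cexp u). rewrite E, Cmod_0 in H. pose proof (exp_pos (Re u)). lra. Qed.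

Section Expand.
Variables (a2 a1 a0 b1 b0 : R).
Definition gf (tau : R) (l : C) : C := charf a2 a1 a0 b1 b0 tau l.

Lemma gf_identity (tau : R) (l0 w : C) :
  let E0 := Cexp (- (l0 * RtoC tau))%C in
  let q0 := (RtoC b1 * l0 + RtoC b0)%C in
  let t := RtoC tau in
  (gf tau (l0 + w) - gf tau l0)%C =
  (poly6 (3 * l0 * l0 + 2 * RtoC a2 * l0 + RtoC a1 + E0 * (RtoC b1 - t * q0))
         (3 * l0 + RtoC a2 + E0 * (q0 * t * t / RtoC 2 - RtoC b1 * t))
         (1 + E0 * (- q0 * t * t * t / RtoC 6 + RtoC b1 * t * t / RtoC 2))
         (E0 * (q0 * t * t * t * t / RtoC 24 - RtoC b1 * t * t * t / RtoC 6))
         (E0 * (- q0 * t * t * t * t * t / RtoC 120 + RtoC b1 * t * t * t * t / RtoC 24))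
         (E0 * (- RtoC b1 * t * t * t * t * t / RtoC 120)) w
   + (q0 + RtoC b1 * w) * E0 * (Cexp (- (w * RtoC tau)) - Tsum (- (w * RtoC tau)) 5))%C.
Proof.
  intros E0 q0 t. unfold gf, charf.
  replace (Cexp (- ((l0 + w) * RtoC tau))) with (E0 * Cexp (- (w * RtoC tau)))%C
    by (unfold E0; rewrite <- Cexp_add; f_equal; ring).
  rewrite Tsum5. unfold poly6, q0, t. simpl Cpow. unfold E0. field; try cnz.
Qed.

Lemma gf_local (tau : R) (l0 : C) :
  exists (k : nat) (c : C) (K : R), (1 <= k <= 5)%nat /\ c <> 0%C /\ 0 <= K /\
    forall w, Cmod w <= 1 -> Cmod (gf tau (l0 + w) - gf tau l0 - c * w ^ k)%C <= K * Cmod w ^ (S k).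
Proof.
  set (E0 := Cexp (- (l0 * RtoC tau))%C).
  set (q0 := (RtoC b1 * l0 + RtoC b0)%C).
  set (t := RtoC tau).
  set (K0 := (Cmod q0 + Rabs b1) * Cmod E0 * (Rabs tau ^ 6 * exp (Rabs tau))).
  assert (HK0 : 0 <= K0).
  { unfold K0. pose proof (Cmod_ge_0 q0). pose proof (Rabs_pos b1). pose proof (Cmod_ge_0 E0).
    pose proof (exp_pos (Rabs tau)). pose proof (pow_le _ 6 (Rabs_pos tau)).
    apply Rmult_le_pos; [apply Rmult_le_pos|]; nra. }
  assert (HE0 : E0 <> 0%C) by apply Cexp_neq0.
  apply (firstnz (3 * l0 * l0 + 2 * RtoC a2 * l0 + RtoC a1 + E0 * (RtoC b1 - t * q0))
         (3 * l0 + RtoC a2 + E0 * (q0 * t * t / RtoC 2 - RtoC b1 * t))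
         (1 + E0 * (- q0 * t * t * t / RtoC 6 + RtoC b1 * t * t / RtoC 2))
         (E0 * (q0 * t * t * t * t / RtoC 24 - RtoC b1 * t * t * t / RtoC 6))
         (E0 * (- q0 * t * t * t * t * t / RtoC 120 + RtoC b1 * t * t * t * t / RtoC 24))
         (E0 * (- RtoC b1 * t * t * t * t * t / RtoC 120)) (fun w => gf tau (l0 + w) - gf tau l0)%C K0 HK0).
  - intros w Hw. rewrite (gf_identity tau l0 w). fold E0 q0 t.
    match goal with |- Cmod (?P + ?Rm - ?P) <= _ => replace (P + Rm - P)%C with Rm by ring end.
    rewrite !Cmod_mult.
    assert (H1 : Cmod (q0 + RtoC b1 * w) <= Cmod q0 + Rabs b1).
    { eapply Rle_trans; [apply Cmod_triangle|]. rewrite Cmod_mult, Cmod_R.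
      pose proof (Rabs_pos b1). pose proof (Cmod_ge_0 w). nra. }
    assert (H2 := Cexp_taylor (- (w * RtoC tau))%C 5).
    rewrite Cmod_opp, Cmod_mult, Cmod_R in H2.
    assert (Hw0 := Cmod_ge_0 w). assert (Ht0 := Rabs_pos tau).
    assert (H3 : Cmod w * Rabs tau <= Rabs tau) by nra.
    assert (H4 : exp (Cmod w * Rabs tau) <= exp (Rabs tau)).
    { destruct H3 as [H3|H3]; [left; apply exp_increasing; auto| rewrite H3; right; reflexivity]. }
    assert (H5 : (Cmod w * Rabs tau) ^ 6 * exp (Cmod w * Rabs tau) <= Rabs tau ^ 6 * exp (Rabs tau) * Cmod w ^ 6).
    { rewrite Rpow_mult_distr. 
      assert (0 <= Cmod w ^ 6) by (apply pow_le; auto).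
      assert (0 <= Rabs tau ^ 6) by (apply pow_le; auto).
      assert (0 < exp (Cmod w * Rabs tau)) by apply exp_pos.
      replace (Rabs tau ^ 6 * exp (Rabs tau) * Cmod w ^ 6) with ((Cmod w ^ 6 * Rabs tau ^ 6) * exp (Rabs tau)) by ring. apply Rmult_le_compat_l; [apply Rmult_le_pos|]; auto. }
    unfold K0.
    assert (0 <= Cmod (Cexp (- (w * tau)) - Tsum (- (w * tau)) 5)) by apply Cmod_ge_0.
    pose proof (Cmod_ge_0 E0). pose proof (Cmod_ge_0 q0).
    assert (0 <= Rabs tau ^ 6 * exp (Rabs tau) * Cmod w ^ 6) by (apply Rmult_le_pos; [apply Rmult_le_pos; [apply pow_le; auto| left; apply exp_pos]|apply pow_le; auto]).
    apply Rle_trans with ((Cmod q0 + Rabs b1) * Cmod E0 * (Rabs tau ^ 6 * exp (Rabs tau) * Cmod w ^ 6)); [|right; ring].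
    apply Rmult_le_compat.
    + apply Rmult_le_pos; apply Cmod_ge_0.
    + apply Cmod_ge_0.
    + apply Rmult_le_compat_r; auto.
    + unfold t; lra.
  - right; right. assert (Ht : t = RtoC tau) by reflexivity. clearbody E0 q0 t. clear K0 HK0.
    set (X3 := (- q0 * t * t * t / RtoC 6 + RtoC b1 * t * t / RtoC 2)%C).
    set (X4 := (q0 * t * t * t * t / RtoC 24 - RtoC b1 * t * t * t / RtoC 6)%C).
    set (X5 := (- q0 * t * t * t * t * t / RtoC 120 + RtoC b1 * t * t * t * t / RtoC 24)%C).
    destruct (Classical_Prop.classic ((1 + E0 * X3)%C = 0%C)) as [D3|D3]; [|left; exact D3].
    destruct (Classical_Prop.classic ((E0 * X4)%C = 0%C)) as [D4|D4]; [|right; left; exact D4].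
    right; right. intro D5.
    assert (Z4 : X4 = 0%C) by (destruct (Classical_Prop.classic (X4 = 0%C)); auto; exfalso; apply (Cmult_neq_0 E0 X4); auto).
    assert (Z5 : X5 = 0%C) by (destruct (Classical_Prop.classic (X5 = 0%C)); auto; exfalso; apply (Cmult_neq_0 E0 X5); auto).
    destruct (Req_dec tau 0) as [T0|T0].
    + assert (X3 = 0%C) by (unfold X3; rewrite Ht, T0; field; try cnz).
      rewrite H, Cmult_0_r, Cplus_0_r in D3. apply (RtoC_neq0 1); [lra|exact D3].
    + assert (Tn : t <> 0%C) by (rewrite Ht; apply RtoC_neq0; auto).
      assert (B1 : RtoC b1 = 0%C).
      { assert (E : (RtoC b1 * (t * t * t * t))%C = (RtoC 120 * (X4 * t / RtoC 5 + X5))%C)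
          by (unfold X4, X5; field; try cnz).
        rewrite Z4, Z5 in E.
        destruct (Classical_Prop.classic (RtoC b1 = 0%C)) as [?|Hb]; auto. exfalso.
        apply (Cmult_neq_0 (RtoC b1) (t*t*t*t)); [auto| repeat apply Cmult_neq_0; auto|].
        rewrite E. field; try cnz. }
      assert (Q0 : q0 = 0%C).
      { assert (E : (q0 * (t * t * t * t))%C = (RtoC 24 * X4 + RtoC 4 * RtoC b1 * t * t * t)%C)
          by (unfold X4; field; try cnz).
        rewrite Z4, B1 in E.
        destruct (Classical_Prop.classic (q0 = 0%C)) as [?|Hq]; auto. exfalso.
        apply (Cmult_neq_0 q0 (t*t*t*t)); [auto| repeat apply Cmult_neq_0; auto|].
        rewrite E. field; try cnz. }
      assert (X3 = 0%C) by (unfold X3; rewrite Q0, B1; field; try cnz).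
      rewrite H, Cmult_0_r, Cplus_0_r in D3. apply (RtoC_neq0 1); [lra|exact D3].
Qed.
End Expand.

Lemma demoivre (phi : R) (n : nat) : ((cos phi, sin phi) ^ n)%C = (cos (INR n * phi), sin (INR n * phi)).
Proof.
  induction n.
  - simpl. rewrite Rmult_0_l, cos_0, sin_0. reflexivity.
  - cbn [Cpow]. rewrite IHn. rewrite S_INR.
    replace ((INR n + 1) * phi) with (phi + INR n * phi) by ring.
    rewrite cos_plus, sin_plus. unfold Cmult; cbn [fst snd]. f_equal; ring.
Qed.

Lemma unit_polar (z : C) : Cmod z = 1 -> exists th, z = (cos th, sin th).
Proof.
  destruct z as [x y]. intro H. unfold Cmod in H; cbn [fst snd] in H.
  assert (Hxy : x ^ 2 + y ^ 2 = 1).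
  { rewrite <- (sqrt_sqrt (x^2+y^2)) by nra. rewrite H. ring. }
  assert (Hx : -1 <= x <= 1) by nra.
  assert (Hs : sqrt (1 - x²) = Rabs y).
  { rewrite <- sqrt_Rsqr_abs. f_equal. unfold Rsqr. nra. }
  destruct (Rle_dec 0 y) as [Hy|Hy].
  - exists (acos x). rewrite cos_acos, sin_acos by auto. rewrite Hs, Rabs_pos_eq by auto. reflexivity.
  - exists (- acos x). rewrite cos_neg, sin_neg, cos_acos, sin_acos by auto. rewrite Hs, Rabs_left by lra.
    f_equal; ring.
Qed.

Lemma kth_root (z : C) (k : nat) : Cmod z = 1 -> (1 <= k)%nat -> exists u, Cmod u = 1 /\ (u ^ k)%C = z.
Proof.
  intros Hz Hk. destruct (unit_polar z Hz) as [th ->].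
  exists (cos (th / INR k), sin (th / INR k)). split.
  - unfold Cmod; cbn [fst snd]. rewrite <- sqrt_1. f_equal.
    rewrite <- (sin2_cos2 (th / INR k)). unfold Rsqr. ring.
  - rewrite demoivre. assert (INR k <> 0) by (apply not_0_INR; lia).
    replace (INR k * (th / INR k)) with th by (field; auto). reflexivity.
Qed.

Section Local.
Variables (a2 a1 a0 b1 b0 : R).
Notation g := (gf a2 a1 a0 b1 b0).

Lemma gf_cont (tau : R) (l0 : C) (eps : R) : 0 < eps ->
  exists delta, 0 < delta /\ forall w, Cmod w < delta -> Cmod (g tau (l0 + w) - g tau l0)%C < eps.
Proof.
  intro He. destruct (gf_local a2 a1 a0 b1 b0 tau l0) as [k [c [K [Hk [Hc [HK Hb]]]]]].
  set (M := Cmod c + K + 1).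
  assert (HM : 0 < M) by (unfold M; pose proof (Cmod_ge_0 c); lra).
  exists (Rmin 1 (eps / M)). split.
  - apply Rmin_pos; [lra| apply Rdiv_lt_0_compat; auto].
  - intros w Hw. assert (Hw1 : Cmod w < 1) by (eapply Rlt_le_trans; [exact Hw| apply Rmin_l]).
    assert (Hw2 : Cmod w < eps / M) by (eapply Rlt_le_trans; [exact Hw| apply Rmin_r]).
    assert (Hw0 := Cmod_ge_0 w).
    specialize (Hb w (Rlt_le _ _ Hw1)).
    replace (g tau (l0 + w) - g tau l0)%C with ((g tau (l0 + w) - g tau l0 - c * w ^ k) + c * w ^ k)%C by ring.
    eapply Rle_lt_trans; [apply Cmod_triangle|]. rewrite Cmod_mult, Cmod_pow.
    assert (P1 : Cmod w ^ k <= Cmod w) by (rewrite <- (pow_1 (Cmod w)) at 2; apply pow_le_decr; [lra|lia]).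
    assert (P2 : Cmod w ^ S k <= Cmod w) by (rewrite <- (pow_1 (Cmod w)) at 2; apply pow_le_decr; [lra|lia]).
    pose proof (Cmod_ge_0 c).
    assert (Cmod c * Cmod w ^ k + K * Cmod w ^ S k <= M * Cmod w).
    { unfold M. pose proof (pow_le _ k Hw0). nra. }
    assert (M * Cmod w < eps).
    { apply Rmult_lt_compat_l with (r := M) in Hw2; auto. unfold Rdiv in Hw2.
      rewrite <- Rmult_assoc, (Rmult_comm M eps), Rmult_assoc, Rinv_r, Rmult_1_r in Hw2 by lra. lra. }
    lra.
Qed.

Lemma gf_isolated (tau : R) (l0 : C) : g tau l0 = 0%C ->
  exists r, 0 < r /\ forall w, 0 < Cmod w < r -> g tau (l0 + w) <> 0%C.
Proof.
  intro H0. destruct (gf_local a2 a1 a0 b1 b0 tau l0) as [k [c [K [Hk [Hc [HK Hb]]]]]].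
  assert (Hc0 : 0 < Cmod c) by (apply Cmod_gt_0; auto).
  exists (Rmin 1 (Cmod c / (K + 1))). split.
  - apply Rmin_pos; [lra| apply Rdiv_lt_0_compat; lra].
  - intros w [Hw0 Hw] E.
    assert (Hw1 : Cmod w < 1) by (eapply Rlt_le_trans; [exact Hw| apply Rmin_l]).
    assert (Hw2 : Cmod w < Cmod c / (K + 1)) by (eapply Rlt_le_trans; [exact Hw| apply Rmin_r]).
    specialize (Hb w (Rlt_le _ _ Hw1)). rewrite E, H0 in Hb.
    replace (0 - 0 - c * w ^ k)%C with (- (c * w ^ k))%C in Hb by ring.
    rewrite Cmod_opp, Cmod_mult, Cmod_pow in Hb. simpl pow in Hb.
    assert (Hpk : 0 < Cmod w ^ k) by (apply pow_lt; auto).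
    assert (Cmod c <= K * Cmod w) by nra.
    assert (K * Cmod w < Cmod c).
    { apply Rmult_lt_compat_l with (r := K + 1) in Hw2; [|lra]. unfold Rdiv in Hw2.
      rewrite <- Rmult_assoc, (Rmult_comm (K+1) (Cmod c)), Rmult_assoc, Rinv_r, Rmult_1_r in Hw2 by lra. nra. }
    lra.
Qed.

Lemma gf_descent (tau : R) (l0 : C) (r : R) : g tau l0 <> 0%C -> 0 < r ->
  exists w, Cmod w < r /\ Cmod (g tau (l0 + w)) < Cmod (g tau l0).
Proof.
  intros HG Hr. destruct (gf_local a2 a1 a0 b1 b0 tau l0) as [k [c [K [Hk [Hc [HK Hb]]]]]].
  set (G := g tau l0) in *. clearbody G.
  assert (Hc0 : 0 < Cmod c) by (apply Cmod_gt_0; auto).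
  assert (HG0 : 0 < Cmod G) by (apply Cmod_gt_0; auto).
  set (z := (- G * Cconj c / (RtoC (Cmod G * Cmod c)))%C).
  assert (Hz : Cmod z = 1).
  { unfold z. rewrite Cmod_div by (apply RtoC_neq0; nra).
    rewrite Cmod_mult, Cmod_opp, Cmod_conj, Cmod_R, Rabs_pos_eq by nra. field. nra. }
  destruct (kth_root z k Hz ltac:(lia)) as [u [Hu Huk]].
  set (t := Rmin (r / 2) (Rmin 1 (Rmin (Cmod G / Cmod c) (Cmod c / (K + 1)) / 2))).
  assert (Ht0 : 0 < t).
  { unfold t. repeat apply Rmin_pos; try apply Rdiv_lt_0_compat; try lra.
    apply Rmin_pos; apply Rdiv_lt_0_compat; lra. }
  assert (Ht1 : t <= 1) by (unfold t; eapply Rle_trans; [apply Rmin_r| apply Rmin_l]).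
  assert (Htr : t < r) by (unfold t; eapply Rle_lt_trans; [apply Rmin_l| lra]).
  assert (Ht2 : t < Cmod G / Cmod c).
  { unfold t. eapply Rle_lt_trans; [apply Rmin_r|]. eapply Rle_lt_trans; [apply Rmin_r|].
    pose proof (Rmin_l (Cmod G / Cmod c) (Cmod c / (K + 1))).
    assert (0 < Cmod G / Cmod c) by (apply Rdiv_lt_0_compat; lra).
    assert (0 < Rmin (Cmod G / Cmod c) (Cmod c / (K + 1))) by (apply Rmin_pos; apply Rdiv_lt_0_compat; lra). lra. }
  assert (Ht3 : t < Cmod c / (K + 1)).
  { unfold t. eapply Rle_lt_trans; [apply Rmin_r|]. eapply Rle_lt_trans; [apply Rmin_r|].
    pose proof (Rmin_r (Cmod G / Cmod c) (Cmod c / (K + 1))).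
    assert (0 < Cmod c / (K + 1)) by (apply Rdiv_lt_0_compat; lra).
    assert (0 < Rmin (Cmod G / Cmod c) (Cmod c / (K + 1))) by (apply Rmin_pos; apply Rdiv_lt_0_compat; lra). lra. }
  exists (RtoC t * u)%C.
  assert (Hw : Cmod (RtoC t * u)%C = t) by (rewrite Cmod_mult, Cmod_R, Hu, Rabs_pos_eq; lra).
  split; [rewrite Hw; exact Htr|].
  specialize (Hb (RtoC t * u)%C ltac:(rewrite Hw; exact Ht1)). rewrite Hw in Hb.
  assert (Hkey : (c * (RtoC t * u) ^ k)%C = (RtoC (- (Cmod c * t ^ k / Cmod G)) * G)%C).
  { rewrite Cpow_mult_l, Huk. unfold z.
    rewrite <- (RtoC_pow t k).
    assert (E : (c * Cconj c)%C = RtoC (Cmod c ^ 2)).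
    { rewrite Cmod2_alt. destruct c as [c1 c2]. unfold Cconj, Cmult, RtoC, Re, Im; cbn [fst snd]. f_equal; ring. }
    assert (RtoC (Cmod G) <> 0%C) by (apply RtoC_neq0; lra).
    assert (RtoC (Cmod c) <> 0%C) by (apply RtoC_neq0; lra).
    replace (c * (RtoC (t ^ k) * (- G * Cconj c / RtoC (Cmod G * Cmod c))))%C with
      (- (c * Cconj c) * RtoC (t ^ k) * G / (RtoC (Cmod G) * RtoC (Cmod c)))%C.
    2:{ rewrite RtoC_mult. field. auto. }
    rewrite E. replace (Cmod c ^ 2) with (Cmod c * Cmod c) by ring.
    rewrite RtoC_opp, RtoC_div by lra. rewrite !RtoC_mult. field. auto. }
  clearbody z t.
  replace (g tau (l0 + RtoC t * u))%C with
    ((g tau (l0 + RtoC t * u) - G - c * (RtoC t * u) ^ k) + RtoC (1 - Cmod c * t ^ k / Cmod G) * G)%C.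
  2:{ rewrite Hkey, RtoC_minus, RtoC_opp. ring. }
  eapply Rle_lt_trans; [apply Cmod_triangle|].
  rewrite Cmod_mult, Cmod_R.
  assert (Hpk : 0 < t ^ k) by (apply pow_lt; lra).
  assert (Htk : t ^ k <= t) by (rewrite <- (pow_1 t) at 2; apply pow_le_decr; [lra|lia]).
  assert (Hq : Cmod c * t ^ k / Cmod G < 1).
  { apply Rmult_lt_reg_r with (Cmod G); auto. unfold Rdiv. rewrite Rmult_assoc, Rinv_l, Rmult_1_r, Rmult_1_l by lra.
    apply Rmult_lt_reg_r with (/ Cmod c); [apply Rinv_0_lt_compat; lra|].
    rewrite Rmult_comm, <- Rmult_assoc, Rinv_l, Rmult_1_l by lra. unfold Rdiv in Ht2. lra. }
  rewrite Rabs_pos_eq.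
  2:{ assert (0 <= Cmod c * t ^ k / Cmod G) by (apply Rmult_le_pos; [apply Rmult_le_pos; lra|left; apply Rinv_0_lt_compat; lra]). lra. }
  assert (HSk : K * t ^ S k < Cmod c * t ^ k).
  { assert (Kt : K * t < Cmod c).
    { apply Rmult_lt_compat_l with (r := K + 1) in Ht3; [|lra]. unfold Rdiv in Ht3.
      rewrite <- Rmult_assoc, (Rmult_comm (K+1) (Cmod c)), Rmult_assoc, Rinv_r, Rmult_1_r in Ht3 by lra. nra. }
    simpl pow. replace (K * (t * t ^ k)) with ((K*t) * t^k) by ring. apply Rmult_lt_compat_r; auto. }
  replace ((1 - Cmod c * t ^ k / Cmod G) * Cmod G) with (Cmod G - Cmod c * t ^ k) by (field; lra).
  lra.
Qed.
End Local.

Lemma inv_small (eps : R) : 0 < eps -> exists N : nat, forall n, (N <= n)%nat -> / (INR n + 1) < eps.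
Proof.
  intro He. destruct (INR_unbounded (/ eps)) as [N HN]. exists N. intros n Hn.
  apply le_INR in Hn. pose proof (pos_INR N).
  assert (0 < / eps) by (apply Rinv_0_lt_compat; auto).
  rewrite <- (Rinv_inv eps). apply Rinv_lt_contravar; [apply Rmult_lt_0_compat; lra| lra].
Qed.

Lemma adh_from_BW (xs : nat -> R) (a b : R) : (forall n, a <= xs n <= b) ->
  exists l, a <= l <= b /\ forall eps N, 0 < eps -> exists p, (N <= p)%nat /\ Rabs (xs p - l) < eps.
Proof.
  intro Hb. destruct (Rtopology.Bolzano_Weierstrass xs (fun c => a <= c <= b) (Rtopology.compact_P3 a b) Hb) as [l Hl].
  assert (Hadh : forall eps N, 0 < eps -> exists p, (N <= p)%nat /\ Rabs (xs p - l) < eps).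
  { intros eps N He. destruct (Hl (Rtopology.disc l (mkposreal eps He)) N) as [p [Hp Hd]].
    - exists (mkposreal eps He). intros y Hy. exact Hy.
    - exists p. split; auto. }
  exists l. split; auto.
  split; apply Rnot_lt_le; intro C.
  - destruct (Hadh (a - l) 0%nat ltac:(lra)) as [p [_ Hp]]. specialize (Hb p).
    apply Rabs_def2 in Hp. lra.
  - destruct (Hadh (l - b) 0%nat ltac:(lra)) as [p [_ Hp]]. specialize (Hb p).
    apply Rabs_def2 in Hp. lra.
Qed.

Lemma adh2 (xs ys : nat -> R) (a b c d : R) :
  (forall n, a <= xs n <= b) -> (forall n, c <= ys n <= d) ->
  exists lx ly, a <= lx <= b /\ c <= ly <= d /\
    forall eps N, 0 < eps -> exists p, (N <= p)%nat /\ Rabs (xs p - lx) < eps /\ Rabs (ys p - ly) < eps.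
Proof.
  intros Hx Hy. destruct (adh_from_BW xs a b Hx) as [lx [Hlx Ax]].
  assert (Hphi : forall k : nat, exists p, (k <= p)%nat /\ Rabs (xs p - lx) < / (INR k + 1)).
  { intro k. apply Ax. apply Rinv_0_lt_compat. pose proof (pos_INR k). lra. }
  set (phi := fun k => proj1_sig (constructive_indefinite_description _ (Hphi k))).
  assert (Hphi2 : forall k, (k <= phi k)%nat /\ Rabs (xs (phi k) - lx) < / (INR k + 1)).
  { intro k. unfold phi. destruct (constructive_indefinite_description _ (Hphi k)); simpl; auto. }
  destruct (adh_from_BW (fun k => ys (phi k)) c d (fun k => Hy (phi k))) as [ly [Hly Ay]].
  exists lx, ly. split; auto. split; auto.
  intros eps N He. destruct (inv_small eps He) as [K HK].
  destruct (Ay eps (max N K) He) as [k [Hk Hyk]].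
  exists (phi k). destruct (Hphi2 k) as [H1 H2].
  split; [lia|]. split; auto.
  eapply Rlt_trans; [exact H2| apply HK; lia].
Qed.

Definition inbox (a b c d : R) (p : R * R) : Prop := a <= fst p <= b /\ c <= snd p <= d.

Lemma evt2 (f : R * R -> R) (a b c d : R) :
  a <= b -> c <= d ->
  (forall p, inbox a b c d p -> forall eps, 0 < eps -> exists delta, 0 < delta /\
      forall q, inbox a b c d q -> Rabs (fst q - fst p) < delta -> Rabs (snd q - snd p) < delta ->
      Rabs (f q - f p) < eps) ->
  (forall p, 0 <= f p) ->
  exists p, inbox a b c d p /\ forall q, inbox a b c d q -> f p <= f q.
Proof.
  intros Hab Hcd Hcont Hpos.
  set (E := fun r => exists q, inbox a b c d q /\ r = - f q).
  assert (HE1 : bound E).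
  { exists 0. intros r [q [_ ->]]. specialize (Hpos q). lra. }
  assert (HE2 : exists r, E r) by (exists (- f (a, c)); exists (a, c); split; [split; simpl; lra| reflexivity]).
  destruct (completeness E HE1 HE2) as [l [Hub Hlub]].
  assert (Hseq : forall n : nat, exists q, inbox a b c d q /\ f q < - l + / (INR n + 1)).
  { intro n. apply NNPP. intro Hn.
    assert (Hn' : forall q, inbox a b c d q -> - l + / (INR n + 1) <= f q).
    { intros q Hq. apply Rnot_lt_le. intro Hlt. apply Hn. exists q; auto. }
    assert (is_upper_bound E (l - / (INR n + 1))).
    { intros r [q [Hq ->]]. specialize (Hn' q Hq). lra. }
    specialize (Hlub _ H). assert (0 < / (INR n + 1)) by (apply Rinv_0_lt_compat; pose proof (pos_INR n); lra). lra. }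
  set (sq := fun n => proj1_sig (constructive_indefinite_description _ (Hseq n))).
  assert (Hsq : forall n, inbox a b c d (sq n) /\ f (sq n) < - l + / (INR n + 1)).
  { intro n. unfold sq. destruct (constructive_indefinite_description _ (Hseq n)); simpl; auto. }
  destruct (adh2 (fun n => fst (sq n)) (fun n => snd (sq n)) a b c d) as [lx [ly [Hlx [Hly Hadh]]]].
  { intro n. apply (Hsq n). } { intro n. apply (Hsq n). }
  exists (lx, ly). split; [split; auto|].
  assert (Hmin : f (lx, ly) <= - l).
  { apply Rnot_lt_le. intro Hgt. set (eps := (f (lx, ly) + l) / 2).
    assert (He : 0 < eps) by (unfold eps; lra).
    destruct (Hcont (lx, ly) (conj Hlx Hly) eps He) as [delta [Hd Hc]].
    destruct (inv_small eps He) as [N HN].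
    destruct (Hadh delta N Hd) as [p [Hp [Hpx Hpy]]].
    specialize (Hc (sq p) (proj1 (Hsq p)) Hpx Hpy). apply Rabs_def2 in Hc.
    specialize (HN p Hp). destruct (Hsq p) as [_ Hfp]. unfold eps in *. lra. }
  intros q Hq. assert (E (- f q)) by (exists q; auto). specialize (Hub _ H). lra.
Qed.

Lemma Cmod_rev (a b : C) : Rabs (Cmod a - Cmod b) <= Cmod (a - b)%C.
Proof.
  assert (H1 : Cmod a <= Cmod (a - b)%C + Cmod b).
  { replace a with ((a - b) + b)%C at 1 by ring. apply Cmod_triangle. }
  assert (H2 : Cmod b <= Cmod (a - b)%C + Cmod a).
  { replace b with (- (a - b) + a)%C at 1 by ring. eapply Rle_trans; [apply Cmod_triangle|]. rewrite Cmod_opp. lra. }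
  apply Rabs_le. lra.
Qed.

Lemma abs_le (x M : R) : Rabs x <= M -> - M <= x <= M.
Proof. unfold Rabs; destruct Rcase_abs; intro; lra. Qed.

Lemma fst_le_Cmod (z : C) : Rabs (fst z) <= Cmod z.
Proof. eapply Rle_trans; [apply Rmax_l| apply Rmax_Cmod]. Qed.
Lemma snd_le_Cmod (z : C) : Rabs (snd z) <= Cmod z.
Proof. eapply Rle_trans; [apply Rmax_r| apply Rmax_Cmod]. Qed.
Lemma Cmod_le_sum (z : C) : Cmod z <= Rabs (fst z) + Rabs (snd z).
Proof.
  destruct z as [a b]; unfold Cmod; cbn [fst snd].
  pose proof (Rabs_pos a); pose proof (Rabs_pos b).
  apply Rsqr_incr_0_var; [|lra]. rewrite Rsqr_sqrt by nra. unfold Rsqr.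
  assert (a ^ 2 = Rabs a * Rabs a) by (rewrite <- Rabs_mult, Rabs_pos_eq by nra; ring).
  assert (b ^ 2 = Rabs b * Rabs b) by (rewrite <- Rabs_mult, Rabs_pos_eq by nra; ring).
  nra.
Qed.

Lemma Cexp_le1 (l : C) (tau : R) : 0 <= Re l -> 0 <= tau -> Cmod (Cexp (- (l * RtoC tau)))%C <= 1.
Proof.
  intros Hl Ht. rewrite Cmod_Cexp. rewrite <- exp_0. 
  destruct l as [x y]. unfold Re, Cmult, Copp, RtoC in *; cbn [fst snd] in *.
  assert (- (x * tau - y * 0) <= 0) by nra.
  destruct H as [H|H]; [left; apply exp_increasing; auto| rewrite H; right; reflexivity].
Qed.

Section Stab.
Variables (a2 a1 a0 b1 b0 : R).
Notation g := (gf a2 a1 a0 b1 b0).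
Definition Mb := 1 + Rabs a2 + Rabs a1 + Rabs a0 + Rabs b1 + Rabs b0.

Lemma root_bound (tau : R) (l : C) : 0 <= tau -> 0 <= Re l -> g tau l = 0%C -> Cmod l <= Mb.
Proof.
  intros Ht Hl H. unfold gf, charf in H.
  set (E := Cexp (- (l * RtoC tau))%C) in *.
  assert (HE : Cmod E <= 1) by (apply Cexp_le1; auto). clearbody E.
  assert (Hl3 : (l * l * l)%C = (- (RtoC a2 * (l * l) + RtoC a1 * l + RtoC a0 + (RtoC b1 * l + RtoC b0) * E))%C).
  { replace (l * l * l)%C with ((l * l * l + RtoC a2 * (l * l) + RtoC a1 * l + RtoC a0 + (RtoC b1 * l + RtoC b0) * E) - (RtoC a2 * (l * l) + RtoC a1 * l + RtoC a0 + (RtoC b1 * l + RtoC b0) * E))%C by ring. rewrite H. ring. }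
  set (r := Cmod l).
  assert (Hr0 : 0 <= r) by apply Cmod_ge_0.
  assert (Hc : r * r * r <= Rabs a2 * (r * r) + Rabs a1 * r + Rabs a0 + (Rabs b1 * r + Rabs b0)).
  { replace (r * r * r) with (Cmod (l * l * l)%C) by (unfold r; rewrite !Cmod_mult; ring).
    rewrite Hl3, Cmod_opp.
    repeat (eapply Rle_trans; [apply Cmod_triangle|]; apply Rplus_le_compat; try apply Rle_refl).
    all: try (rewrite ?Cmod_mult, ?Cmod_R; unfold r; right; ring).
    rewrite Cmod_mult. eapply Rle_trans with (Cmod (RtoC b1 * l + RtoC b0)%C * 1).
    - apply Rmult_le_compat_l; [apply Cmod_ge_0|auto].
    - rewrite Rmult_1_r. eapply Rle_trans; [apply Cmod_triangle|]. rewrite !Cmod_mult, !Cmod_R. right; unfold r; ring. }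
  unfold Mb. pose proof (Rabs_pos a2). pose proof (Rabs_pos a1). pose proof (Rabs_pos a0).
  pose proof (Rabs_pos b1). pose proof (Rabs_pos b0).
  destruct (Rle_dec r 1); [lra|].
  assert (Hrr : r <= r * r) by nra. assert (H1r : 1 <= r * r) by nra.
  pose proof (Rmult_le_compat_l (Rabs a1) _ _ (Rabs_pos a1) Hrr).
  pose proof (Rmult_le_compat_l (Rabs b1) _ _ (Rabs_pos b1) Hrr).
  pose proof (Rmult_le_compat_l (Rabs a0) _ _ (Rabs_pos a0) H1r).
  pose proof (Rmult_le_compat_l (Rabs b0) _ _ (Rabs_pos b0) H1r).
  assert (r * r * r <= (Rabs a2 + Rabs a1 + Rabs a0 + Rabs b1 + Rabs b0) * (r * r)) by nra.
  assert (r <= Rabs a2 + Rabs a1 + Rabs a0 + Rabs b1 + Rabs b0) by nra.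
  lra.
Qed.

Lemma perturb (tau tau' : R) (l : C) : 0 <= Re l -> 0 <= tau -> 0 <= tau' ->
  Cmod (g tau l - g tau' l)%C <=
  Cmod (RtoC b1 * l + RtoC b0)%C * (Cmod l * Rabs (tau - tau') * exp (Cmod l * Rabs (tau - tau'))).
Proof.
  intros Hl Ht Ht'. unfold gf, charf.
  replace (Cexp (- (l * RtoC tau))) with (Cexp (- (l * RtoC tau')) * Cexp (- (l * RtoC (tau - tau'))))%C
    by (rewrite <- Cexp_add; f_equal; rewrite RtoC_minus; ring).
  match goal with |- Cmod ?X <= _ =>
    replace X with ((RtoC b1 * l + RtoC b0) * Cexp (- (l * RtoC tau')) * (Cexp (- (l * RtoC (tau - tau'))) - Tsum (- (l * RtoC (tau - tau'))) 0))%C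
    by (cbn [Tsum]; ring) end.
  rewrite !Cmod_mult.
  pose proof (Cexp_taylor (- (l * RtoC (tau - tau')))%C 0) as HT.
  rewrite Cmod_opp, Cmod_mult, Cmod_R, pow_1 in HT.
  pose proof (Cexp_le1 l tau' Hl Ht').
  pose proof (Cmod_ge_0 (RtoC b1 * l + RtoC b0)%C).
  pose proof (Cmod_ge_0 (Cexp (- (l * RtoC tau')))%C).
  pose proof (Cmod_ge_0 (Cexp (- (l * RtoC (tau - tau'))) - Tsum (- (l * RtoC (tau - tau'))) 0)%C).
  rewrite Rmult_assoc. apply Rmult_le_compat_l; auto.
  apply Rle_trans with (1 * ((Cmod l * Rabs (tau - tau')) * exp (Cmod l * Rabs (tau - tau')))); [|lra].
  apply Rmult_le_compat; auto.
Qed.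


Definition Lc (M : R) := (Rabs b1 * M + Rabs b0) * M * exp M + 1.

Lemma Lc_pos (M : R) : 0 <= M -> 0 < Lc M.
Proof.
  intro HM. unfold Lc. pose proof (Rabs_pos b1); pose proof (Rabs_pos b0); pose proof (exp_pos M).
  assert (0 <= (Rabs b1 * M + Rabs b0) * M * exp M) by (apply Rmult_le_pos; [apply Rmult_le_pos|]; nra). lra.
Qed.

Lemma perturb_unif (M tau tau' : R) (l : C) : 0 <= M -> Cmod l <= M -> 0 <= Re l -> 0 <= tau -> 0 <= tau' ->
  Rabs (tau - tau') <= 1 -> Cmod (g tau l - g tau' l)%C <= Lc M * Rabs (tau - tau').
Proof.
  intros HM Hl Hre Ht Ht' Hd. eapply Rle_trans; [apply perturb; auto|].
  set (D := Rabs (tau - tau')) in *. assert (HD : 0 <= D) by apply Rabs_pos.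
  assert (HQ : Cmod (RtoC b1 * l + RtoC b0)%C <= Rabs b1 * M + Rabs b0).
  { eapply Rle_trans; [apply Cmod_triangle|]. rewrite Cmod_mult, !Cmod_R.
    pose proof (Rabs_pos b1). nra. }
  assert (Hl0 := Cmod_ge_0 l).
  assert (HE : exp (Cmod l * D) <= exp M).
  { assert (Cmod l * D <= M) by nra. destruct H as [H|H]; [left; apply exp_increasing; auto|rewrite H; lra]. }
  assert (Hp : Cmod l * D * exp (Cmod l * D) <= M * exp M * D).
  { pose proof (exp_pos (Cmod l * D)). pose proof (exp_pos M).
    apply Rle_trans with (M * D * exp M); [|right; ring].
    apply Rmult_le_compat; try nra. }
  unfold Lc. pose proof (Cmod_ge_0 (RtoC b1 * l + RtoC b0)%C).
  assert (0 <= Cmod l * D * exp (Cmod l * D)) by (pose proof (exp_pos (Cmod l * D)); apply Rmult_le_pos; nra).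
  apply Rle_trans with ((Rabs b1 * M + Rabs b0) * (M * exp M * D)).
  - apply Rmult_le_compat; auto.
  - pose proof (exp_pos M). pose proof (Rabs_pos b1). pose proof (Rabs_pos b0).
    assert (0 <= (Rabs b1 * M + Rabs b0) * M * exp M) by (apply Rmult_le_pos; [apply Rmult_le_pos|]; nra).
    nra.
Qed.

Lemma fcont (tau : R) (p : C) (eps : R) : 0 < eps -> exists delta, 0 < delta /\ forall q : C,
  Rabs (fst q - fst p) < delta -> Rabs (snd q - snd p) < delta -> Rabs (Cmod (g tau q) - Cmod (g tau p)) < eps.
Proof.
  intro He. destruct (gf_cont a2 a1 a0 b1 b0 tau p eps He) as [d [Hd H]].
  exists (d / 2). split; [lra|]. intros q H1 H2.
  eapply Rle_lt_trans; [apply Cmod_rev|].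
  replace q with (p + (q - p))%C by ring. apply H.
  eapply Rle_lt_trans; [apply Cmod_le_sum|].
  destruct q as [q1 q2], p as [p1 p2]. unfold Cminus, Cplus, Copp; cbn [fst snd] in *.
  replace (q1 + - p1) with (q1 - p1) by ring. replace (q2 + - p2) with (q2 - p2) by ring. lra.
Qed.

Lemma fmin_box (tau a b c d : R) : a <= b -> c <= d ->
  exists p, inbox a b c d p /\ forall q, inbox a b c d q -> Cmod (g tau p) <= Cmod (g tau q).
Proof.
  intros Hab Hcd. apply (evt2 (fun p => Cmod (g tau p)) a b c d Hab Hcd).
  - intros p _ eps He. destruct (fcont tau p eps He) as [dl [Hdl H]]. exists dl. split; [exact Hdl|]. intros q _ H1 H2. apply H; auto.

  - intro; apply Cmod_ge_0.
Qed.

Lemma openness (t : R) : 0 <= t -> all_roots_neg a2 a1 a0 b1 b0 t ->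
  exists delta, 0 < delta /\ forall tau, 0 <= tau -> Rabs (tau - t) < delta -> all_roots_neg a2 a1 a0 b1 b0 tau.
Proof.
  intros Ht Hst.
  assert (HM : 0 <= Mb) by (unfold Mb; pose proof (Rabs_pos a2); pose proof (Rabs_pos a1); pose proof (Rabs_pos a0);
     pose proof (Rabs_pos b1); pose proof (Rabs_pos b0); lra).
  destruct (fmin_box t 0 Mb (- Mb) Mb ltac:(lra) ltac:(lra)) as [p0 [Hp0 Hmin]].
  set (m := Cmod (g t p0)).
  assert (Hm : 0 < m).
  { destruct (Cmod_ge_0 (g t p0)) as [H|H]; [exact H|]. exfalso.
    symmetry in H. apply Cmod_eq_0 in H. specialize (Hst p0 H). destruct Hp0 as [[H1 _] _].
    unfold Re in Hst. lra. }
  pose proof (Lc_pos Mb HM) as HL.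
  exists (Rmin 1 (m / (2 * Lc Mb))). split.
  { apply Rmin_pos; [lra|]. apply Rdiv_lt_0_compat; lra. }
  intros tau Htau Hd l Hl. apply Rnot_le_lt. intro Hre.
  assert (HlM : Cmod l <= Mb) by (apply (root_bound tau l Htau Hre Hl)).
  assert (Hin : inbox 0 Mb (- Mb) Mb l).
  { pose proof (fst_le_Cmod l). pose proof (snd_le_Cmod l). unfold Re in Hre.
    apply abs_le in H. apply abs_le in H0. split; split; cbn [fst snd]; lra. }
  specialize (Hmin l Hin).
  assert (Hd1 : Rabs (t - tau) <= 1) by (rewrite Rabs_minus_sym; eapply Rle_trans; [left; exact Hd|apply Rmin_l]).
  pose proof (perturb_unif Mb t tau l HM HlM Hre Ht Htau Hd1) as HP.
  unfold gf in HP, Hmin. rewrite Hl in HP. replace (charf a2 a1 a0 b1 b0 t l - 0)%C with (charf a2 a1 a0 b1 b0 t l) in HP by ring.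
  assert (Hd2 : Rabs (t - tau) < m / (2 * Lc Mb)) by (rewrite Rabs_minus_sym; eapply Rlt_le_trans; [exact Hd|apply Rmin_r]).
  assert (Lc Mb * Rabs (t - tau) < m / 2).
  { apply Rmult_lt_compat_l with (r := Lc Mb) in Hd2; auto.
    replace (Lc Mb * (m / (2 * Lc Mb))) with (m / 2) in Hd2 by (field; lra). exact Hd2. }
  unfold m, gf in *. lra.
Qed.

Lemma seg_min (t a b c d : R) : a <= b -> c <= d -> (forall q, inbox a b c d q -> g t q <> 0%C) ->
  exists m, 0 < m /\ forall q, inbox a b c d q -> m <= Cmod (g t q).
Proof.
  intros Hab Hcd Hnz. destruct (fmin_box t a b c d Hab Hcd) as [p [Hp Hm]].
  exists (Cmod (g t p)). split; auto. apply Cmod_gt_0. apply Hnz; auto.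
Qed.

Lemma persistence (t : R) (l0 : C) : 0 <= t -> g t l0 = 0%C -> 0 < Re l0 ->
  exists delta, 0 < delta /\ forall tau, 0 <= tau -> Rabs (tau - t) < delta ->
    exists l, g tau l = 0%C /\ 0 < Re l.
Proof.
  intros Ht H0 Hre. destruct (gf_isolated a2 a1 a0 b1 b0 t l0 H0) as [r0 [Hr0 Hiso]].
  destruct l0 as [xs ys]. unfold Re in Hre; cbn [fst] in Hre.
  set (r := Rmin (r0 / 4) (xs / 2)).
  assert (Hr : 0 < r) by (apply Rmin_pos; lra).
  assert (Hr1 : r <= r0 / 4) by apply Rmin_l.
  assert (Hr2 : r <= xs / 2) by apply Rmin_r.
  set (S := inbox (xs - r) (xs + r) (ys - r) (ys + r)).
  assert (Hbd : forall q, S q -> (fst q = xs - r \/ fst q = xs + r \/ snd q = ys - r \/ snd q = ys + r) -> g t q <> 0%C).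
  { intros q [[Hq1 Hq2] [Hq3 Hq4]] Hb.
    replace q with ((xs, ys) + (q - (xs, ys)))%C by ring. apply Hiso.
    destruct q as [q1 q2]; cbn [fst snd] in *.
    set (w := ((q1, q2) - (xs, ys))%C).
    assert (Hw1 : fst w = q1 - xs) by (unfold w, Cminus, Cplus, Copp; cbn [fst snd]; ring).
    assert (Hw2 : snd w = q2 - ys) by (unfold w, Cminus, Cplus, Copp; cbn [fst snd]; ring).
    split.
    - pose proof (fst_le_Cmod w). pose proof (snd_le_Cmod w). rewrite Hw1 in *. rewrite Hw2 in *.
      destruct Hb as [E|[E|[E|E]]]; rewrite E in *.
      + replace (xs - r - xs) with (- r) in * by ring. rewrite Rabs_Ropp, Rabs_pos_eq in * by lra. lra.
      + replace (xs + r - xs) with r in * by ring. rewrite Rabs_pos_eq in * by lra. lra.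
      + replace (ys - r - ys) with (- r) in * by ring. rewrite Rabs_Ropp, Rabs_pos_eq in * by lra. lra.
      + replace (ys + r - ys) with r in * by ring. rewrite Rabs_pos_eq in * by lra. lra.
    - eapply Rle_lt_trans; [apply Cmod_le_sum|]. rewrite Hw1, Hw2.
      assert (Rabs (q1 - xs) <= r) by (apply Rabs_le; lra).
      assert (Rabs (q2 - ys) <= r) by (apply Rabs_le; lra). lra. }
  destruct (seg_min t (xs - r) (xs - r) (ys - r) (ys + r) ltac:(lra) ltac:(lra)) as [m1 [Hm1 Hs1]].
  { intros q Hq. apply Hbd; [destruct Hq as [? ?]; split; [split|]; lra|]. left; destruct Hq as [? _]; lra. }
  destruct (seg_min t (xs + r) (xs + r) (ys - r) (ys + r) ltac:(lra) ltac:(lra)) as [m2 [Hm2 Hs2]].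
  { intros q Hq. apply Hbd; [destruct Hq as [? ?]; split; [split|]; lra|]. right; left; destruct Hq as [? _]; lra. }
  destruct (seg_min t (xs - r) (xs + r) (ys - r) (ys - r) ltac:(lra) ltac:(lra)) as [m3 [Hm3 Hs3]].
  { intros q Hq. apply Hbd; [destruct Hq as [? ?]; split; [|split]; lra|]. right; right; left; destruct Hq as [_ ?]; lra. }
  destruct (seg_min t (xs - r) (xs + r) (ys + r) (ys + r) ltac:(lra) ltac:(lra)) as [m4 [Hm4 Hs4]].
  { intros q Hq. apply Hbd; [destruct Hq as [? ?]; split; [|split]; lra|]. right; right; right; destruct Hq as [_ ?]; lra. }
  set (m := Rmin (Rmin m1 m2) (Rmin m3 m4)).
  assert (Hm : 0 < m) by (unfold m; repeat apply Rmin_pos; lra).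
  assert (Hbm : forall q, S q -> (fst q = xs - r \/ fst q = xs + r \/ snd q = ys - r \/ snd q = ys + r) ->
            m <= Cmod (g t q)).
  { intros q [[Hq1 Hq2] [Hq3 Hq4]] Hb.
    assert (m <= m1 /\ m <= m2 /\ m <= m3 /\ m <= m4).
    { unfold m. repeat split.
      - eapply Rle_trans; apply Rmin_l.
      - eapply Rle_trans; [apply Rmin_l| apply Rmin_r].
      - eapply Rle_trans; [apply Rmin_r| apply Rmin_l].
      - eapply Rle_trans; apply Rmin_r. }
    destruct Hb as [E|[E|[E|E]]].
    - specialize (Hs1 q ltac:(split; split; lra)). lra.
    - specialize (Hs2 q ltac:(split; split; lra)). lra.
    - specialize (Hs3 q ltac:(split; split; lra)). lra.
    - specialize (Hs4 q ltac:(split; split; lra)). lra. }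
  set (M' := Cmod (xs, ys) + 2 * r).
  assert (HM' : 0 <= M') by (unfold M'; pose proof (Cmod_ge_0 (xs, ys)); lra).
  assert (HSM : forall q, S q -> Cmod q <= M' /\ 0 <= Re q).
  { intros q [[Hq1 Hq2] [Hq3 Hq4]]. split.
    - replace q with ((xs, ys) + (q - (xs, ys)))%C by ring.
      eapply Rle_trans; [apply Cmod_triangle|]. unfold M'. apply Rplus_le_compat_l.
      eapply Rle_trans; [apply Cmod_le_sum|].
      destruct q as [q1 q2]; unfold Cminus, Cplus, Copp; cbn [fst snd] in *.
      assert (Rabs (q1 + - xs) <= r) by (apply Rabs_le; lra).
      assert (Rabs (q2 + - ys) <= r) by (apply Rabs_le; lra). lra.
    - unfold Re. lra. }
  pose proof (Lc_pos M' HM') as HL.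
  exists (Rmin 1 (m / (2 * Lc M'))). split.
  { apply Rmin_pos; [lra|]. apply Rdiv_lt_0_compat; lra. }
  intros tau Htau Hd.
  assert (Hd1 : Rabs (tau - t) <= 1) by (eapply Rle_trans; [left; exact Hd|apply Rmin_l]).
  assert (Hd2 : Rabs (tau - t) < m / (2 * Lc M')) by (eapply Rlt_le_trans; [exact Hd|apply Rmin_r]).
  assert (Hsmall : Lc M' * Rabs (tau - t) < m / 2).
  { apply Rmult_lt_compat_l with (r := Lc M') in Hd2; auto.
    replace (Lc M' * (m / (2 * Lc M'))) with (m / 2) in Hd2 by (field; lra). exact Hd2. }
  assert (Hpert : forall q, S q -> Cmod (g tau q - g t q)%C < m / 2).
  { intros q Hq. destruct (HSM q Hq) as [HqM Hqr].
    eapply Rle_lt_trans; [apply (perturb_unif M' tau t q HM' HqM Hqr Htau Ht Hd1)|]. exact Hsmall. }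
  destruct (fmin_box tau (xs - r) (xs + r) (ys - r) (ys + r) ltac:(lra) ltac:(lra)) as [p [Hp Hpmin]].
  fold S in Hp, Hpmin.
  assert (HS0 : S (xs, ys)) by (split; cbn [fst snd]; split; lra).
  assert (Hpl : Cmod (g tau p) < m / 2).
  { eapply Rle_lt_trans; [apply Hpmin; exact HS0|].
    specialize (Hpert _ HS0). rewrite H0 in Hpert. replace (g tau (xs, ys) - 0)%C with (g tau (xs, ys)) in Hpert by ring.
    exact Hpert. }
  assert (Hint : xs - r < fst p < xs + r /\ ys - r < snd p < ys + r).
  { destruct Hp as [[Hp1 Hp2] [Hp3 Hp4]].
    assert (Hnb : ~ (fst p = xs - r \/ fst p = xs + r \/ snd p = ys - r \/ snd p = ys + r)).
    { intro Hb. specialize (Hbm p (conj (conj Hp1 Hp2) (conj Hp3 Hp4)) Hb).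
      specialize (Hpert p (conj (conj Hp1 Hp2) (conj Hp3 Hp4))).
            assert (Cmod (g t p) - Cmod (g tau p) <= Cmod (g tau p - g t p)%C).
      { replace (g tau p - g t p)%C with (- (g t p - g tau p))%C by ring. rewrite Cmod_opp.
        pose proof (Cmod_rev (g t p) (g tau p)). apply Rle_trans with (Rabs (Cmod (g t p) - Cmod (g tau p))); auto.
        apply Rle_abs. }
      lra. }
    destruct (Rle_lt_or_eq_dec _ _ Hp1) as [A1|E]; [|exfalso; apply Hnb; left; auto].
    destruct (Rle_lt_or_eq_dec _ _ Hp2) as [A2|E]; [|exfalso; apply Hnb; right; left; auto].
    destruct (Rle_lt_or_eq_dec _ _ Hp3) as [A3|E]; [|exfalso; apply Hnb; right; right; left; auto].
    destruct (Rle_lt_or_eq_dec _ _ Hp4) as [A4|E]; [|exfalso; apply Hnb; right; right; right; auto].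
    auto. }
  exists p. split.
  - apply NNPP. intro Hnz.
    set (rho := Rmin (Rmin (fst p - (xs - r)) (xs + r - fst p)) (Rmin (snd p - (ys - r)) (ys + r - snd p))).
    assert (Hrho : 0 < rho) by (unfold rho; repeat apply Rmin_pos; lra).
    destruct (gf_descent a2 a1 a0 b1 b0 tau p rho Hnz Hrho) as [w [Hw Hlt]].
    assert (HSw : S (p + w)%C).
    { pose proof (fst_le_Cmod w). pose proof (snd_le_Cmod w).
      assert (rho <= fst p - (xs - r)) by (unfold rho; eapply Rle_trans; apply Rmin_l).
      assert (rho <= xs + r - fst p) by (unfold rho; eapply Rle_trans; [apply Rmin_l|apply Rmin_r]).
      assert (rho <= snd p - (ys - r)) by (unfold rho; eapply Rle_trans; [apply Rmin_r|apply Rmin_l]).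
      assert (rho <= ys + r - snd p) by (unfold rho; eapply Rle_trans; apply Rmin_r).
      destruct p as [p1 p2], w as [w1 w2]. unfold Cplus; cbn [fst snd] in *.
      apply abs_le in H. apply abs_le in H1. split; cbn [fst snd]; split; lra. }
    specialize (Hpmin _ HSw). lra.
  - unfold Re. lra.
Qed.

End Stab.

Lemma main_cont (a2 a1 a0 b1 b0 T : R) :
  all_roots_neg a2 a1 a0 b1 b0 0 ->
  (forall tau, 0 <= tau < T -> forall l, Re l = 0 -> charf a2 a1 a0 b1 b0 tau l <> 0%C) ->
  forall tau, 0 <= tau < T -> all_roots_neg a2 a1 a0 b1 b0 tau.
Proof.
  intros H0 Hax tau1 Htau1. apply NNPP. intro Hns.
  set (U := fun tau => 0 <= tau < T /\ ~ all_roots_neg a2 a1 a0 b1 b0 tau).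
  set (F := fun x => exists tau, U tau /\ x = - tau).
  assert (HF1 : bound F) by (exists 0; intros x [tau [[[Ht _] _] ->]]; lra).
  assert (HF2 : exists x, F x) by (exists (- tau1); exists tau1; split; [split; auto|reflexivity]).
  destruct (completeness F HF1 HF2) as [l [Hub Hlub]].
  set (t := - l).
  assert (Hi : forall tau, U tau -> t <= tau).
  { intros tau Hu. assert (F (- tau)) by (exists tau; auto). specialize (Hub _ H). unfold t; lra. }
  assert (Hii : forall eps, 0 < eps -> exists tau, U tau /\ tau < t + eps).
  { intros eps He. apply NNPP. intro Hn.
    assert (is_upper_bound F (l - eps)).
    { intros x [tau [Hu ->]]. apply Rnot_lt_le. intro Hlt. apply Hn. exists tau. split; auto. unfold t; lra. }
    specialize (Hlub _ H). lra. }
  assert (Ht0 : 0 <= t).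
  { assert (is_upper_bound F 0) by (intros x [tau [[[Ht _] _] ->]]; lra). specialize (Hlub _ H). unfold t; lra. }
  assert (HtT : t < T).
  { assert (U tau1) by (split; auto). specialize (Hi _ H). lra. }
  destruct (classic (all_roots_neg a2 a1 a0 b1 b0 t)) as [Hst|Hst].
  - destruct (openness a2 a1 a0 b1 b0 t Ht0 Hst) as [d [Hd Hop]].
    destruct (Hii d Hd) as [tau [[[Hta Htb] Hun] Hlt]].
    apply Hun. apply Hop; auto. specialize (Hi tau (conj (conj Hta Htb) Hun)).
    rewrite Rabs_pos_eq; lra.
  - assert (Hroot : exists l0, charf a2 a1 a0 b1 b0 t l0 = 0%C /\ 0 < Re l0).
    { apply NNPP. intro Hn. apply Hst. intros l0 Hl0. apply Rnot_le_lt. intro Hle.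
      destruct (Rle_lt_or_eq_dec _ _ Hle) as [Hlt|Heq].
      - apply Hn. exists l0. auto.
      - apply (Hax t (conj Ht0 HtT) l0); auto. }
    destruct Hroot as [l0 [Hl0 Hre]].
    assert (Htp : 0 < t).
    { destruct Ht0 as [?|Heq]; auto. exfalso. rewrite <- Heq in Hl0. specialize (H0 l0 Hl0). lra. }
    destruct (persistence a2 a1 a0 b1 b0 t l0 Ht0 Hl0 Hre) as [d [Hd Hper]].
    set (tau := Rmax 0 (t - d / 2)).
    assert (Hta : 0 <= tau) by apply Rmax_l.
    assert (Htb : tau < t) by (unfold tau; apply Rmax_lub_lt; lra).
    assert (Htc : Rabs (tau - t) < d).
    { rewrite Rabs_left by lra. assert (t - d / 2 <= tau) by apply Rmax_r. lra. }
    destruct (Hper tau Hta Htc) as [l1 [Hl1 Hre1]].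
    assert (U tau).
    { split; [lra|]. intro Hs. specialize (Hs l1 Hl1). lra. }
    specialize (Hi _ H). lra.
Qed.

Lemma charf_parts (a2 a1 a0 b1 b0 tau x y : R) :
  charf a2 a1 a0 b1 b0 tau (x, y) = 0%C ->
  let er := exp (- (x * tau)) * cos (- (y * tau)) in
  let ei := exp (- (x * tau)) * sin (- (y * tau)) in
  (x*x*x - 3*x*y*y + a2*(x*x - y*y) + a1*x + a0 + ((b1*x+b0)*er - b1*y*ei) = 0) /\
  (3*x*x*y - y*y*y + 2*a2*x*y + a1*y + ((b1*x+b0)*ei + b1*y*er) = 0).
Proof.
  intros H er ei. unfold charf, Cexp, Re, Im in H.
  unfold Cmult, Cplus, Copp, RtoC in H; cbn [fst snd] in H.
  injection H as H1 H2. unfold er, ei.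
  replace (- (x * tau - y * 0)) with (- (x * tau)) in * by ring.
  replace (- (x * 0 + y * tau)) with (- (y * tau)) in * by ring.
  split; [rewrite <- H1|rewrite <- H2]; ring.
Qed.

Lemma routh_hurwitz (a2 a1 a0 b1 b0 : R) : 0 < a2 -> 0 < a0 + b0 -> 0 < a2 * (a1 + b1) - (a0 + b0) ->
  all_roots_neg a2 a1 a0 b1 b0 0.
Proof.
  intros Ha2 Hc0 Hrh [x y] Hl. unfold Re; cbn [fst].
  destruct (charf_parts a2 a1 a0 b1 b0 0 x y Hl) as [E1 E2].
  rewrite !Rmult_0_r, Ropp_0, exp_0, cos_0, sin_0 in E1, E2.
  assert (Hc1 : 0 < a1 + b1).
  { apply Rnot_le_lt. intro. assert (a2 * (a1 + b1) <= 0) by nra. lra. }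
  apply Rnot_le_lt. intro Hx.
  destruct (Req_dec y 0) as [Hy|Hy].
  - subst y. assert (x * x * x + a2 * (x * x) + (a1 + b1) * x + (a0 + b0) = 0) by lra.
    assert (0 <= x * x) by nra. assert (0 <= x * x * x) by nra. nra.
  - assert (Hy2 : y * y = 3 * x * x + 2 * a2 * x + (a1 + b1)).
    { apply (Rmult_eq_reg_l y); auto. nra. }
    assert (E : -8 * x*x*x - 8 * a2 * x*x - 2 * ((a1 + b1) + a2*a2) * x + ((a0 + b0) - a2 * (a1 + b1)) = 0).
    { assert (Hxy : x * y * y = x * (3 * x * x + 2 * a2 * x + (a1 + b1))) by (rewrite <- Hy2; ring).
      assert (Ha2y : a2 * (y * y) = a2 * (3 * x * x + 2 * a2 * x + (a1 + b1))) by (rewrite <- Hy2; ring).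
      lra. }
    assert (0 <= x * x) by nra. assert (0 <= x * x * x) by nra. nra.
Qed.

Lemma imag_root (a2 a1 a0 b1 b0 tau y : R) :
  charf a2 a1 a0 b1 b0 tau (0, y) = 0%C ->
  hcubic (cA a2 a1) (cB a2 a1 a0 b1) (cC a0 b0) (y ^ 2) = 0 /\
  (a0 - a2 * y^2 + b0 * cos (y * tau) + b1 * y * sin (y * tau) = 0) /\
  (a1 * y - y^3 + b1 * y * cos (y * tau) - b0 * sin (y * tau) = 0).
Proof.
  intro H. destruct (charf_parts a2 a1 a0 b1 b0 tau 0 y H) as [E1 E2].
  replace (- (0 * tau)) with 0 in E1, E2 by ring. rewrite exp_0, cos_neg, sin_neg in E1, E2.
  set (c := cos (y * tau)) in *. set (s := sin (y * tau)) in *.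
  assert (Hcs : s * s + c * c = 1) by (unfold s, c; pose proof (sin2_cos2 (y * tau)); unfold Rsqr in H0; lra).
  assert (F1 : a0 - a2 * y^2 + b0 * c + b1 * y * s = 0) by nra.
  assert (F2 : a1 * y - y^3 + b1 * y * c - b0 * s = 0) by nra.
  split; [|split; auto].
  unfold hcubic, cA, cB, cC.
  assert (G1 : a0 - a2 * y^2 = - (b0 * c + b1 * y * s)) by lra.
  assert (G2 : a1 * y - y^3 = - (b1 * y * c - b0 * s)) by lra.
  assert (Hsq : (a0 - a2 * y^2)^2 + (a1 * y - y^3)^2 = b0^2 + b1^2 * y^2).
  { rewrite G1, G2. replace (b0 ^ 2 + b1 ^ 2 * y ^ 2) with ((b0^2 + b1^2*y^2) * (s * s + c * c)) by (rewrite Hcs; ring). ring. }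
  replace ((y ^ 2) ^ 3 + ((a2 ^ 2 - 2 * a1) * (y ^ 2) ^ 2) + ((a1 ^ 2 - 2 * a2 * a0 - b1 ^ 2) * y ^ 2) + (a0 ^ 2 - b0 ^ 2))
    with ((a0 - a2 * y^2)^2 + (a1 * y - y^3)^2 - (b0^2 + b1^2 * y^2)) by ring.
  lra.
Qed.

Lemma charf_imag (a2 a1 a0 b1 b0 tau y : R) :
  charf a2 a1 a0 b1 b0 tau (0, y) =
  (a0 - a2 * y^2 + b0 * cos (y * tau) + b1 * y * sin (y * tau),
   a1 * y - y^3 + b1 * y * cos (y * tau) - b0 * sin (y * tau)).
Proof.
  unfold charf, Cexp, Re, Im, Cmult, Cplus, Copp, RtoC; cbn [fst snd].
  replace (- (0 * tau - y * 0)) with 0 by ring. replace (- (0 * 0 + y * tau)) with (- (y * tau)) by ring.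
  rewrite exp_0, cos_neg, sin_neg. f_equal; ring.
Qed.

Lemma part_a (a2 a1 a0 b1 b0 : R) : 0 < a2 -> 0 < a0 + b0 -> 0 < a2 * (a1 + b1) - (a0 + b0) ->
  0 <= cC a0 b0 -> cDelta (cA a2 a1) (cB a2 a1 a0 b1) < 0 ->
  forall tau, 0 <= tau -> all_roots_neg a2 a1 a0 b1 b0 tau.
Proof.
  intros Ha2 Hc0 Hrh HC HD tau Htau.
  apply (main_cont a2 a1 a0 b1 b0 (tau + 1)); [apply routh_hurwitz; auto| |lra].
  intros t Ht [x y] Hre Hl. unfold Re in Hre; cbn [fst] in Hre. subst x.
  destruct (imag_root a2 a1 a0 b1 b0 t y Hl) as [Hh [F1 F2]].
  destruct (Req_dec y 0) as [Hy|Hy].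
  - subst y. rewrite Rmult_0_l, cos_0, sin_0 in F1. lra.
  - unfold hcubic, cDelta, cA, cB, cC in *.
    set (A := a2 ^ 2 - 2 * a1) in *. set (B := a1 ^ 2 - 2 * a2 * a0 - b1 ^ 2) in *.
    set (z := y ^ 2) in *.
    assert (Hz : 0 < z) by (unfold z; apply pow2_gt_0; auto).
    assert (Hq : 0 < z * z + A * z + B) by (pose proof (pow2_ge_0 (2 * z + A)); pose proof (pow2_ge_0 A); nra).
    assert (0 < z * (z * z + A * z + B)) by nra.
    assert (z ^ 3 + A * z ^ 2 + B * z = z * (z * z + A * z + B)) by ring. lra.
Qed.

Lemma part_b (a2 a1 a0 b1 b0 z0 : R) : 0 < a2 -> 0 < a0 + b0 -> 0 < a2 * (a1 + b1) - (a0 + b0) ->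
  0 < cA a2 a1 -> cC a0 b0 < 0 ->
  0 < z0 -> hcubic (cA a2 a1) (cB a2 a1 a0 b1) (cC a0 b0) z0 = 0 ->
  (forall z, 0 < z < z0 -> hcubic (cA a2 a1) (cB a2 a1 a0 b1) (cC a0 b0) z <> 0) ->
  forall tau, 0 <= tau < tau0_of a2 a1 a0 b1 b0 (sqrt z0) -> all_roots_neg a2 a1 a0 b1 b0 tau.
Proof.
  intros Ha2 Hc0 Hrh HA HC Hz0 Hh0 Hmin tau Htau.
  assert (Hst0 := routh_hurwitz a2 a1 a0 b1 b0 Ha2 Hc0 Hrh).
  apply (main_cont a2 a1 a0 b1 b0 (tau0_of a2 a1 a0 b1 b0 (sqrt z0))); [exact Hst0| |exact Htau].
  intros t Ht [x y] Hre Hl. unfold Re in Hre; cbn [fst] in Hre. subst x.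
  destruct (imag_root a2 a1 a0 b1 b0 t y Hl) as [Hh [F1 F2]].
  destruct (Req_dec y 0) as [Hy|Hy].
  { subst y. rewrite Rmult_0_l, cos_0, sin_0 in F1. nra. }
  assert (Hz : 0 < y ^ 2) by (apply pow2_gt_0; auto).
  assert (Hyz : y ^ 2 = z0).
  { unfold hcubic in Hh, Hh0. set (A := cA a2 a1) in *. set (B := cB a2 a1 a0 b1) in *. set (C := cC a0 b0) in *.
    set (z := y ^ 2) in *.
    destruct (Rtotal_order z z0) as [Hlt|[Heq|Hgt]]; auto.
    - exfalso. apply (Hmin z); [lra|]. unfold hcubic; exact Hh.
    - exfalso. clearbody A B C z.
      assert (Hf : (z - z0) * (z * z + z * z0 + z0 * z0 + A * (z + z0) + B) = 0).
      { rewrite <- (Rminus_0_r 0). rewrite <- Hh at 1. rewrite <- Hh0. ring. }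
      apply Rmult_integral in Hf. destruct Hf as [Hf|Hf]; [lra|].
      assert (HBz : B * z0 = - (z * z + z * z0 + z0 * z0 + A * (z + z0)) * z0) by (replace B with (- (z * z + z * z0 + z0 * z0 + A * (z + z0))) by lra; ring).
      assert (HCv : C = z0 * z * (z0 + z + A)).
      { replace C with (- (z0 ^ 3 + A * z0 ^ 2 + B * z0)) by lra. rewrite HBz. ring. }
      assert (0 < z0 * z) by nra. assert (0 < z0 + z + A) by lra.
      assert (0 < z0 * z * (z0 + z + A)) by nra. lra. }
  set (w0 := sqrt z0).
  assert (Hw0 : 0 < w0) by (apply sqrt_lt_R0; auto).
  assert (Hw2 : w0 ^ 2 = z0) by (unfold w0; rewrite <- Rsqr_pow2; apply Rsqr_sqrt; lra).
  assert (Hyw : Rabs y = w0).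
  { unfold w0. rewrite <- Hyz. rewrite <- Rsqr_pow2. symmetry. apply sqrt_Rsqr_abs. }
  set (D := b0 ^ 2 + b1 ^ 2 * y ^ 2).
  destruct (Req_dec D 0) as [HD|HD].
  - assert (Hb0 : b0 = 0) by (unfold D in HD; pose proof (pow2_ge_0 b0); pose proof (pow2_ge_0 b1); nra).
    assert (Hb1 : b1 = 0).
    { unfold D in HD. rewrite Hb0 in HD. assert (b1 ^ 2 * y ^ 2 = 0) by nra.
      apply Rmult_integral in H. destruct H as [H|H]; [|lra]. apply (pow_eq_zero_ex b1 2 ltac:(lia)) in H || nra. }
    assert (Hr : charf a2 a1 a0 b1 b0 0 (0, y) = 0%C).
    { rewrite charf_imag. rewrite Hb0, Hb1 in *. unfold RtoC; f_equal; lra. }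
    specialize (Hst0 _ Hr). unfold Re in Hst0; cbn [fst] in Hst0. lra.
  - assert (HDp : 0 < D).
    { assert (HD0 : 0 <= D) by (unfold D; pose proof (pow2_ge_0 b0); assert (0 <= b1 ^ 2 * y ^ 2) by (apply Rmult_le_pos; apply pow2_ge_0); lra).
      destruct HD0 as [?|E]; [auto|exfalso; apply HD; auto]. }
    set (Xa := (b0 * (a2 * w0 ^ 2 - a0) + b1 * w0 * (w0 ^ 3 - a1 * w0)) / (b0 ^ 2 + b1 ^ 2 * w0 ^ 2)).
    assert (Hcos : cos (w0 * t) = Xa).
    { assert (Hcy : cos (y * t) = cos (w0 * t)).
      { destruct (Rle_dec 0 y) as [Hy0|Hy0].
        - rewrite Rabs_pos_eq in Hyw by auto. rewrite Hyw. reflexivity.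
        - rewrite Rabs_left in Hyw by lra. rewrite <- Hyw. replace (- y * t) with (- (y * t)) by ring.
          rewrite cos_neg. reflexivity. }
      rewrite <- Hcy. unfold Xa.
      assert (HD' : b0 ^ 2 + b1 ^ 2 * w0 ^ 2 = D) by (unfold D; rewrite Hw2, Hyz; reflexivity).
      rewrite HD'. apply (Rmult_eq_reg_r D); [|lra]. unfold Rdiv. rewrite Rmult_assoc, Rinv_l, Rmult_1_r by lra.
      assert (Hnum : b1 * w0 * (w0 ^ 3 - a1 * w0) = b1 * y * (y ^ 3 - a1 * y)).
      { replace (b1 * w0 * (w0 ^ 3 - a1 * w0)) with (b1 * ((w0 ^ 2) ^ 2 - a1 * w0 ^ 2)) by ring.
        replace (b1 * y * (y ^ 3 - a1 * y)) with (b1 * ((y ^ 2) ^ 2 - a1 * y ^ 2)) by ring.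
        rewrite Hw2, Hyz. reflexivity. }
      rewrite Hnum, Hw2, <- Hyz. unfold D.
      assert (E : b0 * (a0 - a2 * y ^ 2 + b0 * cos (y * t) + b1 * y * sin (y * t)) + b1 * y * (a1 * y - y ^ 3 + b1 * y * cos (y * t) - b0 * sin (y * t)) = 0) by (rewrite F1, F2; ring).
      lra. }
    assert (HX : -1 <= Xa <= 1) by (rewrite <- Hcos; apply COS_bound).
    assert (Hwt : w0 * t < acos Xa).
    { destruct Ht as [Ht0 Ht1]. unfold tau0_of in Ht1. fold w0 in Ht1. fold Xa in Ht1.
      apply Rmult_lt_compat_l with (r := w0) in Ht1; auto.
      rewrite <- Rmult_assoc, Rinv_r, Rmult_1_l in Ht1 by lra. exact Ht1. }
    pose proof (acos_bound Xa) as [Hac0 Hac1].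
    assert (Hwt0 : 0 <= w0 * t) by (destruct Ht; nra).
    assert (cos (acos Xa) < cos (w0 * t)) by (apply cos_decreasing_1; lra).
    rewrite cos_acos in H by auto. lra.
Qed.

Lemma model_alg (A11v A22v ka k q be m p sg g th : R) :
  A11v = sg + k -> A22v = g + q -> p * m = ka * g * th -> be * k = g * q ->
  0 < sg -> 0 < k -> 0 < q -> 0 < g -> 0 < ka -> 0 < be -> 0 < th < 1 ->
  let a2 := A11v + A22v + ka in
  let a1 := A11v * A22v + ka * A11v + ka * A22v - k * q in
  let a0 := ka * A11v * A22v - ka * k * q - p * q * m in
  let b1 := be * k - p * m in
  let b0 := be * k * ka + be * p * m - p * m * A11v in
  0 < a2 /\ 0 < cA a2 a1 /\ (0 < a0 + b0 -> 0 <= cC a0 b0 -> 0 <= cB a2 a1 a0 b1).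
Proof.
  intros H11 H22 Hpm Hbk Hsg Hk Hq Hg Hka Hbe [Hth0 Hth1] a2 a1 a0 b1 b0.
  subst A11v A22v. unfold a2, a1, a0, b1, b0, cA, cB, cC.
  split; [lra|]. split.
  { replace ((sg + k + (g + q) + ka) ^ 2 - 2 * ((sg + k) * (g + q) + ka * (sg + k) + ka * (g + q) - k * q))
      with ((sg + k) ^ 2 + (g + q) ^ 2 + ka ^ 2 + 2 * k * q) by ring.
    assert (0 < k * q) by nra. pose proof (pow2_ge_0 (sg + k)). pose proof (pow2_ge_0 (g + q)). pose proof (pow2_ge_0 ka). lra. }
  intros Hs HC.
  replace (p * q * m) with (q * (p * m)) by ring.
  replace (be * p * m) with (be * (p * m)) by ring.
  rewrite Hpm, Hbk.
  rewrite Hpm in HC, Hs. replace (p * q * m) with (q * (ka * g * th)) in HC, Hs by (rewrite <- Hpm; ring).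
  replace (be * p * m) with (be * (ka * g * th)) in HC, Hs by (rewrite <- Hpm; ring).
  rewrite Hbk in HC, Hs.
  set (a0' := ka * (sg + k) * (g + q) - ka * k * q - q * (ka * g * th)) in *.
  set (b0' := g * q * ka + be * (ka * g * th) - ka * g * th * (sg + k)) in *.
  assert (Hd : 0 <= a0' - b0').
  { apply Rnot_lt_le. intro. assert ((a0' - b0') * (a0' + b0') < 0) by nra.
    assert (a0' ^ 2 - b0' ^ 2 = (a0' - b0') * (a0' + b0')) by ring. lra. }
  assert (Hid : a0' - b0' = ka * ((1 + th) * (sg + k) * g - (1 + th) * q * g + sg * q - be * g * th)) by (unfold a0', b0'; ring).
  assert (Hin : 0 <= (1 + th) * (sg + k) * g - (1 + th) * q * g + sg * q - be * g * th).
  { apply Rnot_lt_le. intro. assert (ka * ((1 + th) * (sg + k) * g - (1 + th) * q * g + sg * q - be * g * th) < 0) by nra. lra. }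
  assert (Hqg : q * g <= (sg + k) * g + sg * q).
  { assert (0 <= be * g * th) by (apply Rmult_le_pos; [apply Rmult_le_pos|]; lra).
    assert (0 <= sg * q * th) by (apply Rmult_le_pos; [apply Rmult_le_pos|]; lra).
    nra. }
  set (X := (sg + k) * g + sg * q).
  assert (Hqg0 : 0 <= q * g) by nra.
  assert (HX : (q * g) ^ 2 <= X ^ 2) by (unfold X in *; nra).
  set (Rr := ka^2*g^2*(1 - th^2) + 4*q*ka*th*g^2 + 2*q*ka^2*g + 2*q*ka^2*th*g + 2*q^2*ka*th*g + q^2*ka^2
     + 2*k*q*ka*th*g + 2*k*q*ka^2 + k^2*ka^2 + 2*sg*q*ka*th*g + 2*sg*k*ka^2 + sg^2*ka^2).
  assert (HR : 0 <= Rr).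
  { unfold Rr. assert (0 <= 1 - th ^ 2) by nra.
    assert (0 <= ka^2*g^2) by nra.
    assert (0 <= ka^2*g^2*(1 - th^2)) by nra.
    assert (0 <= q*ka*th*g^2) by (repeat apply Rmult_le_pos; nra).
    assert (0 <= q*ka^2*g) by (repeat apply Rmult_le_pos; nra).
    assert (0 <= q*ka^2*th*g) by (repeat apply Rmult_le_pos; nra).
    assert (0 <= q^2*ka*th*g) by (repeat apply Rmult_le_pos; nra).
    assert (0 <= q^2*ka^2) by nra.
    assert (0 <= k*q*ka*th*g) by (repeat apply Rmult_le_pos; nra).
    assert (0 <= k*q*ka^2) by (repeat apply Rmult_le_pos; nra).
    assert (0 <= k^2*ka^2) by nra.
    assert (0 <= sg*q*ka*th*g) by (repeat apply Rmult_le_pos; nra).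
    assert (0 <= sg*k*ka^2) by (repeat apply Rmult_le_pos; nra).
    assert (0 <= sg^2*ka^2) by nra.
    lra. }
  assert (Hid2 : ((sg + k) * (g + q) + ka * (sg + k) + ka * (g + q) - k * q) ^ 2 -
    2 * (sg + k + (g + q) + ka) * a0' - (g * q - ka * g * th) ^ 2 = X ^ 2 - (q * g) ^ 2 + Rr)
    by (unfold a0', X, Rr; ring).
  rewrite Hid2. lra.
Qed.

Theorem theorem2
  (s d a Tmax b alpha mu p c : R) (T2 I2 V2 : R)
  (hs : 0 < s) (hd : 0 < d) (ha : 0 < a) (hTmax : 0 < Tmax) (hb : 0 < b)
  (halpha : 0 < alpha) (hmu : 0 < mu) (hp : 0 < p) (hc : 0 < c)
  (hT2 : 0 < T2) (hI2 : 0 < I2) (hV2 : 0 < V2)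
  (eqT : s - d * T2 + a * T2 * (1 - (T2 + I2) / Tmax)
           - b * T2 * V2 / (1 + alpha * V2) = 0)
  (eqI : b * T2 * V2 / (1 + alpha * V2) + a * I2 * (1 - (T2 + I2) / Tmax)
           - mu * I2 = 0)
  (eqV : p * I2 - c * V2 = 0) :
  let a2 := ca2 d a Tmax b alpha p T2 I2 V2 in
  let a1 := ca1 d a Tmax b alpha p T2 I2 V2 in
  let a0 := ca0 d a Tmax b alpha p T2 I2 V2 in
  let b1 := cb1 d a Tmax b alpha p T2 I2 V2 in
  let b0 := cb0 d a Tmax b alpha p T2 I2 V2 in
  let A := cA a2 a1 in
  let B := cB a2 a1 a0 b1 in
  let C := cC a0 b0 in
  let Delta := cDelta A B in
  0 < a0 + b0 ->
  0 < a2 * (a1 + b1) - (a0 + b0) ->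
  (* (a) *)
  ((0 <= C -> Delta < 0 -> forall tau, 0 <= tau -> all_roots_neg a2 a1 a0 b1 b0 tau)
  /\
  (* (b) *)
   ((C < 0 \/ (0 <= C /\ 0 <= Delta /\ 0 < cz1 A Delta
                 /\ hcubic A B C (cz1 A Delta) <= 0)) ->
    forall z0 : R, 0 < z0 -> hcubic A B C z0 = 0 ->
    (forall z, 0 < z < z0 -> hcubic A B C z <> 0) ->
    let w0 := sqrt z0 in
    let tau0 := tau0_of a2 a1 a0 b1 b0 w0 in
    forall tau, 0 <= tau < tau0 -> all_roots_neg a2 a1 a0 b1 b0 tau)).
Proof.
  intros a2 a1 a0 b1 b0 A B C Delta Hpos Hrh.
  assert (hq1 : 0 < 1 + alpha * V2) by nra.
  set (sg := s / T2). set (g := b * T2 * V2 / ((1 + alpha * V2) * I2)). set (th := 1 / (1 + alpha * V2)).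
  assert (H11 : A11 d a Tmax b alpha p T2 I2 V2 = sg + ck d a Tmax b alpha p T2 I2 V2).
  { unfold A11, crho, cbeta, ck, sg.
    assert (E : d - a + a * (T2 + I2) / Tmax + b * V2 / (1 + alpha * V2) = s / T2).
    { apply (Rmult_eq_reg_r T2); [|lra]. unfold Rdiv at 3. rewrite Rmult_assoc, Rinv_l, Rmult_1_r by lra.
      transitivity (s - (s - d * T2 + a * T2 * (1 - (T2 + I2) / Tmax) - b * T2 * V2 / (1 + alpha * V2)));
        [field; lra| rewrite eqT; ring]. }
    lra. }
  assert (H22 : A22 d a Tmax b alpha p T2 I2 V2 = g + cq d a Tmax b alpha p T2 I2 V2) by reflexivity.
  assert (Hpm : p * cm d a Tmax b alpha p T2 I2 V2 = ckappa d a Tmax b alpha p T2 I2 V2 * g * th).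
  { unfold cm, ckappa, g, th. field. lra. }
  assert (Hbk : cbeta d a Tmax b alpha p T2 I2 V2 * ck d a Tmax b alpha p T2 I2 V2 = g * cq d a Tmax b alpha p T2 I2 V2).
  { unfold cbeta, ck, g, cq. field. lra. }
  assert (Hsg : 0 < sg) by (unfold sg; apply Rdiv_lt_0_compat; lra).
  assert (Hk : 0 < ck d a Tmax b alpha p T2 I2 V2) by (unfold ck; apply Rdiv_lt_0_compat; nra).
  assert (Hq : 0 < cq d a Tmax b alpha p T2 I2 V2) by (unfold cq; apply Rdiv_lt_0_compat; nra).
  assert (Hg : 0 < g) by (unfold g; apply Rdiv_lt_0_compat; [|apply Rmult_lt_0_compat]; try nra;
                           apply Rmult_lt_0_compat; [apply Rmult_lt_0_compat|]; lra).
  assert (Hka : 0 < ckappa d a Tmax b alpha p T2 I2 V2) by (unfold ckappa; apply Rdiv_lt_0_compat; nra).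
  assert (Hbe : 0 < cbeta d a Tmax b alpha p T2 I2 V2) by (unfold cbeta; apply Rdiv_lt_0_compat; nra).
  assert (Hth : 0 < th < 1).
  { unfold th. split; [apply Rdiv_lt_0_compat; lra|].
    apply (Rmult_lt_reg_r (1 + alpha * V2)); [lra|]. unfold Rdiv. rewrite Rmult_assoc, Rinv_l by lra. nra. }
  destruct (model_alg _ _ _ _ _ _ _ p sg g th H11 H22 Hpm Hbk Hsg Hk Hq Hg Hka Hbe Hth) as [Ha2 [HA HBC]].
  change (0 < a2) in Ha2. change (0 < A) in HA. change (0 < a0 + b0 -> 0 <= C -> 0 <= B) in HBC.
  split.
  - intros HC HD tau Htau. apply part_a; auto.
  - intros Hcase z0 Hz0 Hh0 Hmin w0 tau0 tau Htau.
    assert (HC : C < 0).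
    { destruct Hcase as [HC|[HC [HD [Hz1 _]]]]; auto. exfalso.
      specialize (HBC Hpos HC). unfold cz1 in Hz1.
      assert (Hsq : A < sqrt Delta) by lra.
      assert (A ^ 2 < Delta).
      { rewrite <- (sqrt_sqrt Delta HD). simpl. rewrite Rmult_1_r. nra. }
      unfold Delta, cDelta in H. lra. }
    apply (part_b a2 a1 a0 b1 b0 z0 Ha2 Hpos Hrh HA HC Hz0 Hh0 Hmin tau Htau).
Qed.
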